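(* Let $n\ge 2$, let $(a_{rq})_{1\le r,q\le n}$ be a real (not necessarily symmetric) matrix, and let $f:\mathbb{R}^n\to\mathbb{R}$, $f(x_1,\dots,x_n)=\sum_{r,q=1}^n a_{rq}\,x_r x_q^2$. Let $M=\mathrm{graph}(f)\subset\mathbb{R}^{n+1}$ with the induced metric $g$, and let $g(t)$, $t\in[0,T)$, be a smooth family of metrics on a neighborhood of $p$ (the origin) in $M$ solving the Ricci flow $\partial_t g=-2\,\mathrm{Ric}(g)$ with $g(0)=g$. Then $Rm(0,p)=0$, and in the global coordinates $x$ the time derivatives $\partial_t R_{ijkl}(0,p)$, for $i<j$, $k<l$, $i\le k$, are: (i) $0$ if $i,j,k,l$ are mutually distinct; (ii) $8(a_{il}a_{lj}+a_{li}a_{ij})-8a_{ij}a_{lj}$ if $i<k=j<l$; (iii) $8a_{ij}a_{kj}-8(a_{ik}a_{kj}+a_{ki}a_{ij})$ if $i<k<l=j$; (iv) $8a_{li}a_{ji}-8(a_{jl}a_{li}+a_{lj}a_{ji})$ if $i=k$, $j\ne l$; (v) $8(a_{ij}^2+a_{ji}^2)-8\big(\sum_{q\ne i,j}a_{qi}a_{qj}+3a_{ii}a_{ij}+3a_{jj}a_{ji}\big)$ if $i=k$, $j=l$. (All other components are determined from these by the symmetries of the curvature tensor.) In particular, if $a_{\alpha\beta}a_{\beta\gamma}+a_{\beta\alpha}a_{\alpha\gamma}=a_{\alpha\gamma}a_{\beta\gamma}$ for all mutually distinct $\alpha,\beta,\gamma$, then $\partial_t R_{ijkl}(0,p)=0$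 whenever $\{i,j\}\neq\{k,l\}$. *)

(* Defs.v *)
(* A point of space-time is encoded as
   y : nat -> R with y 0 = t (time) and y 1, ..., y n = x_1, ..., x_n.
   Coordinates of index > n are irrelevant (continuity below forces all
   functions considered to be independent of them). *)
From Stdlib Require Import Reals Lra List Arith ClassicalEpsilon.
Open Scope R_scope.

Definition sum1 (n : nat) (F : nat -> R) : R :=
  fold_right Rplus 0 (map F (seq 1 n)).

Definition kdelta (i j : nat) : R := if Nat.eqb i j then 1 else 0.

Definition origin : nat -> R := fun _ => 0.

Definition upd (y : nat -> R) (m : nat) (v : R) : nat -> R :=
  fun k => if Nat.eqb k m then v else y k.

(* l is the partial derivative of F in coordinate m at y, relative to the
   domain U (one-sided where U is one-sided, e.g. at t = 0). *)
Definition has_pd (U : (nat -> R) -> Prop) (F : (nat -> R) -> R) (m : nat)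
  (y : nat -> R) (l : R) : Prop :=
  forall eps, 0 < eps -> exists delta, 0 < delta /\
    forall h, h <> 0 -> Rabs h < delta -> U (upd y m (y m + h)) ->
      Rabs ((F (upd y m (y m + h)) - F y) / h - l) < eps.

Definition pd (U : (nat -> R) -> Prop) (m : nat) (F : (nat -> R) -> R)
  (y : nat -> R) : R :=
  epsilon (inhabits 0) (has_pd U F m y).

Definition iter_pd (U : (nat -> R) -> Prop) (s : list nat) (F : (nat -> R) -> R)
  : (nat -> R) -> R :=
  fold_right (fun m G => pd U m G) F s.

Definition cont_on (n : nat) (U : (nat -> R) -> Prop) (F : (nat -> R) -> R) : Prop :=
  forall y, U y -> forall eps, 0 < eps -> exists delta, 0 < delta /\
    forall z, U z -> (forall k, (k <= n)%nat -> Rabs (z k - y k) < delta) ->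
      Rabs (F z - F y) < eps.

Definition smooth_on (n : nat) (U : (nat -> R) -> Prop) (F : (nat -> R) -> R) : Prop :=
  forall s : list nat, (forall m, In m s -> (m <= n)%nat) ->
    cont_on n U (iter_pd U s F) /\
    forall m, (m <= n)%nat -> forall y, U y -> exists l, has_pd U (iter_pd U s F) m y l.

Definition open_nbhd0 (n : nat) (V : (nat -> R) -> Prop) : Prop :=
  V origin /\
  (forall y z, (forall k, (1 <= k <= n)%nat -> y k = z k) -> V y -> V z) /\
  (forall y, V y -> exists r, 0 < r /\
     forall z, (forall k, (1 <= k <= n)%nat -> Rabs (z k - y k) < r) -> V z).

Definition domain (T : R) (V : (nat -> R) -> Prop) : (nat -> R) -> Prop :=
  fun y => 0 <= y 0%nat < T /\ V y.

Definition fcubic (n : nat) (a : nat -> nat -> R) (y : nat -> R) : R :=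
  sum1 n (fun r => sum1 n (fun q => a r q * y r * (y q) ^ 2)).

Definition graph_metric (n : nat) (a : nat -> nat -> R) (y : nat -> R) (i j : nat) : R :=
  kdelta i j + pd (fun _ => True) i (fcubic n a) y * pd (fun _ => True) j (fcubic n a) y.

Section Curv.
Variables (n : nat) (U : (nat -> R) -> Prop)
  (g ginv : (nat -> R) -> nat -> nat -> R).

Definition Gamma (y : nat -> R) (i j k : nat) : R :=
  / 2 * sum1 n (fun l => ginv y k l *
     (pd U i (fun z => g z j l) y + pd U j (fun z => g z i l) y
      - pd U l (fun z => g z i j) y)).

(* R(d_i,d_j) d_k = Rup i j k m d_m, with R(X,Y) = [nabla_X, nabla_Y] - nabla_[X,Y] *)
Definition Rup (y : nat -> R) (i j k m : nat) : R :=
  pd U i (fun z => Gamma z j k m) y - pd U j (fun z => Gamma z i k m) y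
  + sum1 n (fun p => Gamma y j k p * Gamma y i p m - Gamma y i k p * Gamma y j p m).

(* R_ijkl = g(R(d_i,d_j)d_k, d_l)   (so R_ijji is a sectional curvature) *)
Definition Rm (y : nat -> R) (i j k l : nat) : R :=
  sum1 n (fun m => Rup y i j k m * g y m l).

Definition Ric (y : nat -> R) (j k : nat) : R :=
  sum1 n (fun i => Rup y i j k i).

End Curv.

Definition ricci_flow (n : nat) (U : (nat -> R) -> Prop)
  (g ginv : (nat -> R) -> nat -> nat -> R) : Prop :=
  (forall i j, (1 <= i <= n)%nat -> (1 <= j <= n)%nat ->
     smooth_on n U (fun y => g y i j)) /\
  (forall y, U y -> forall i j, (1 <= i <= n)%nat -> (1 <= j <= n)%nat ->
     g y i j = g y j i) /\
  (forall y, U y -> forall v : nat -> R,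
     (exists k, (1 <= k <= n)%nat /\ v k <> 0) ->
     0 < sum1 n (fun i => sum1 n (fun j => g y i j * v i * v j))) /\
  (forall y, U y -> forall i k, (1 <= i <= n)%nat -> (1 <= k <= n)%nat ->
     sum1 n (fun j => g y i j * ginv y j k) = kdelta i k /\
     sum1 n (fun j => ginv y i j * g y j k) = kdelta i k) /\
  (forall y, U y -> forall i j, (1 <= i <= n)%nat -> (1 <= j <= n)%nat ->
     has_pd U (fun z => g z i j) 0%nat y (-2 * Ric n U g ginv y i j)).

(* Main.v *)
Require Import Defs.
From Stdlib Require Import Reals Lra Lia List Arith ClassicalEpsilon FunctionalExtensionality PropExtensionality.
Open Scope R_scope.

Fixpoint sumL (l : list nat) (F : nat -> R) : R :=
  match l with nil => 0 | x :: l' => F x + sumL l' F end.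

Lemma sum1_sumL n F : sum1 n F = sumL (seq 1 n) F.
Proof. unfold sum1. induction (seq 1 n); simpl; auto. rewrite IHl; auto. Qed.

Lemma sumL_ext l F G : (forall x, In x l -> F x = G x) -> sumL l F = sumL l G.
Proof. induction l; simpl; intros H; auto. rewrite H by auto. rewrite IHl; auto. Qed.

Lemma sumL_plus l F G : sumL l (fun x => F x + G x) = sumL l F + sumL l G.
Proof. induction l; simpl; [ring|]. rewrite IHl; ring. Qed.

Lemma sumL_minus l F G : sumL l (fun x => F x - G x) = sumL l F - sumL l G.
Proof. induction l; simpl; [ring|]. rewrite IHl; ring. Qed.

Lemma sumL_scal l c F : sumL l (fun x => c * F x) = c * sumL l F.
Proof. induction l; simpl; [ring|]. rewrite IHl; ring. Qed.

Lemma sumL_scalr l c F : sumL l (fun x => F x * c) = sumL l F * c.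
Proof. induction l; simpl; [ring|]. rewrite IHl; ring. Qed.

Lemma sumL_zero l : sumL l (fun _ => 0) = 0.
Proof. induction l; simpl; [ring|]. rewrite IHl; ring. Qed.

Lemma sumL_swap l1 l2 F :
  sumL l1 (fun x => sumL l2 (fun y => F x y)) = sumL l2 (fun y => sumL l1 (fun x => F x y)).
Proof.
  induction l1; simpl.
  - rewrite sumL_zero; auto.
  - rewrite IHl1. rewrite <- sumL_plus. reflexivity.
Qed.

Lemma kdelta_sym i j : kdelta i j = kdelta j i.
Proof. unfold kdelta. destruct (Nat.eqb_spec i j), (Nat.eqb_spec j i); auto; lia. Qed.

Lemma kdelta_eq i : kdelta i i = 1.
Proof. unfold kdelta. rewrite Nat.eqb_refl. auto. Qed.

Lemma kdelta_neq i j : i <> j -> kdelta i j = 0.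
Proof. intro H. unfold kdelta. destruct (Nat.eqb_spec i j); auto; lia. Qed.

Lemma sumL_kdelta l x F : NoDup l -> In x l -> sumL l (fun i => kdelta i x * F i) = F x.
Proof.
  induction l; simpl; intros Hnd Hin; [contradiction|].
  inversion Hnd; subst.
  destruct Hin as [<-|Hin].
  - rewrite kdelta_eq. rewrite (sumL_ext l _ (fun _ => 0)). rewrite sumL_zero. ring.
    intros y Hy. rewrite kdelta_neq. ring. intros ->. auto.
  - rewrite IHl by auto. rewrite kdelta_neq. ring. intros ->. auto.
Qed.

Lemma sum1_ext n F G : (forall x, (1 <= x <= n)%nat -> F x = G x) -> sum1 n F = sum1 n G.
Proof. intros H. rewrite !sum1_sumL. apply sumL_ext. intros x Hx. apply in_seq in Hx. apply H. lia. Qed.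

Lemma sum1_plus n F G : sum1 n (fun x => F x + G x) = sum1 n F + sum1 n G.
Proof. rewrite !sum1_sumL. apply sumL_plus. Qed.
Lemma sum1_minus n F G : sum1 n (fun x => F x - G x) = sum1 n F - sum1 n G.
Proof. rewrite !sum1_sumL. apply sumL_minus. Qed.
Lemma sum1_scal n c F : sum1 n (fun x => c * F x) = c * sum1 n F.
Proof. rewrite !sum1_sumL. apply sumL_scal. Qed.
Lemma sum1_scalr n c F : sum1 n (fun x => F x * c) = sum1 n F * c.
Proof. rewrite !sum1_sumL. apply sumL_scalr. Qed.
Lemma sum1_zero n : sum1 n (fun _ => 0) = 0.
Proof. rewrite !sum1_sumL. apply sumL_zero. Qed.
Lemma sum1_swap n F :
  sum1 n (fun x => sum1 n (fun y => F x y)) = sum1 n (fun y => sum1 n (fun x => F x y)).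
Proof. rewrite !sum1_sumL.
  rewrite (sumL_ext _ _ (fun x => sumL (seq 1 n) (fun y => F x y))) by (intros; apply sum1_sumL).
  rewrite (sumL_ext _ (fun y => sum1 n _) (fun y => sumL (seq 1 n) (fun x => F x y))) by (intros; apply sum1_sumL).
  apply sumL_swap. Qed.
Lemma sum1_kdelta n x F : (1 <= x <= n)%nat -> sum1 n (fun i => kdelta i x * F i) = F x.
Proof. intros H. rewrite sum1_sumL. apply sumL_kdelta. apply seq_NoDup. apply in_seq. lia. Qed.
Lemma sum1_kdelta' n x F : (1 <= x <= n)%nat -> sum1 n (fun i => kdelta x i * F i) = F x.
Proof. intros H. rewrite <- (sum1_kdelta n x F H). apply sum1_ext. intros. rewrite kdelta_sym. auto. Qed.

Lemma sumL_abs l F : Rabs (sumL l F) <= sumL l (fun x => Rabs (F x)).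
Proof.
  induction l; simpl. rewrite Rabs_R0; lra.
  eapply Rle_trans. apply Rabs_triang. lra.
Qed.
Lemma sumL_le l F G : (forall x, In x l -> F x <= G x) -> sumL l F <= sumL l G.
Proof. induction l; simpl; intros H. lra. pose proof (H a (or_introl eq_refl)).
  assert (sumL l F <= sumL l G) by (apply IHl; auto). lra. Qed.
Lemma sum1_abs n F : Rabs (sum1 n F) <= sum1 n (fun x => Rabs (F x)).
Proof. rewrite !sum1_sumL. apply sumL_abs. Qed.
Lemma sum1_le n F G : (forall x, (1 <= x <= n)%nat -> F x <= G x) -> sum1 n F <= sum1 n G.
Proof. intros H. rewrite !sum1_sumL. apply sumL_le. intros x Hx. apply in_seq in Hx. apply H. lia. Qed.
Lemma sum1_const n c : sum1 n (fun _ => c) = INR n * c.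
Proof. unfold sum1. generalize 1%nat. induction n; intros s; simpl. ring.
  rewrite IHn. destruct n; simpl; ring. Qed.

Lemma upd_same y m : upd y m (y m) = y.
Proof. apply functional_extensionality. intro k. unfold upd. destruct (Nat.eqb_spec k m); subst; auto. Qed.
Lemma upd_upd y m a b : upd (upd y m a) m b = upd y m b.
Proof. apply functional_extensionality. intro k. unfold upd. destruct (Nat.eqb_spec k m); auto. Qed.
Lemma upd_comm y m m' a b : m <> m' -> upd (upd y m a) m' b = upd (upd y m' b) m a.
Proof. intros H. apply functional_extensionality. intro k. unfold upd.
  destruct (Nat.eqb_spec k m), (Nat.eqb_spec k m'); subst; auto; lia. Qed.
Lemma upd_at y m v : upd y m v m = v.
Proof. unfold upd. rewrite Nat.eqb_refl. auto. Qed.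
Lemma upd_other y m v k : k <> m -> upd y m v k = y k.
Proof. intros H. unfold upd. destruct (Nat.eqb_spec k m); auto; lia. Qed.

Definition lim (D : R -> Prop) (phi : R -> R) (L : R) : Prop :=
  forall eps, 0 < eps -> exists delta, 0 < delta /\
    forall h, h <> 0 -> Rabs h < delta -> D h -> Rabs (phi h - L) < eps.

Lemma lim_const D c : lim D (fun _ => c) c.
Proof. intros e He. exists 1. split. lra. intros. rewrite Rminus_diag, Rabs_R0. auto. Qed.

Lemma lim_id D : lim D (fun h => h) 0.
Proof. intros e He. exists e. split; auto. intros h _ Hh _. rewrite Rminus_0_r. auto. Qed.

Lemma lim_ext D f g L : (exists d0, 0 < d0 /\ forall h, h <> 0 -> Rabs h < d0 -> D h -> f h = g h) ->
  lim D f L -> lim D g L.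
Proof.
  intros [d0 [Hd0 Hfg]] Hf e He. destruct (Hf e He) as [d [Hd H]].
  exists (Rmin d d0). split. apply Rmin_pos; auto.
  intros h Hh Hhd Dh. rewrite <- Hfg; auto.
  apply H; auto. eapply Rlt_le_trans; [exact Hhd| apply Rmin_l].
  eapply Rlt_le_trans; [exact Hhd| apply Rmin_r].
Qed.

Lemma lim_plus D f g L M : lim D f L -> lim D g M -> lim D (fun h => f h + g h) (L + M).
Proof.
  intros Hf Hg e He.
  destruct (Hf (e/2)) as [d1 [Hd1 H1]]. lra.
  destruct (Hg (e/2)) as [d2 [Hd2 H2]]. lra.
  exists (Rmin d1 d2). split. apply Rmin_pos; auto.
  intros h Hh Hhd Dh.
  specialize (H1 h Hh (Rlt_le_trans _ _ _ Hhd (Rmin_l _ _)) Dh).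
  specialize (H2 h Hh (Rlt_le_trans _ _ _ Hhd (Rmin_r _ _)) Dh).
  replace (f h + g h - (L + M)) with ((f h - L) + (g h - M)) by ring.
  eapply Rle_lt_trans. apply Rabs_triang. lra.
Qed.

Lemma lim_scal D f c L : lim D f L -> lim D (fun h => c * f h) (c * L).
Proof.
  intros Hf e He.
  destruct (Hf (e / (Rabs c + 1))) as [d [Hd H]].
  apply Rdiv_lt_0_compat; auto. pose proof (Rabs_pos c); lra.
  exists d. split; auto. intros h Hh Hhd Dh. specialize (H h Hh Hhd Dh).
  replace (c * f h - c * L) with (c * (f h - L)) by ring. rewrite Rabs_mult.
  pose proof (Rabs_pos c). pose proof (Rabs_pos (f h - L)).
  assert (Rabs (f h - L) * (Rabs c + 1) < e).
  { apply (Rmult_lt_compat_r (Rabs c + 1)) in H. 2: lra.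
    unfold Rdiv in H. rewrite Rmult_assoc, Rinv_l in H by lra. lra. }
  nra.
Qed.

Lemma lim_opp D f L : lim D f L -> lim D (fun h => - f h) (- L).
Proof. intros H. replace (-L) with (-1 * L) by ring.
  eapply lim_ext; [|apply lim_scal; exact H]. exists 1. split. lra. intros; ring. Qed.

Lemma lim_minus D f g L M : lim D f L -> lim D g M -> lim D (fun h => f h - g h) (L - M).
Proof. intros Hf Hg. apply lim_plus; auto. apply lim_opp; auto. Qed.

Lemma lim_mult D f g L M : lim D f L -> lim D g M -> lim D (fun h => f h * g h) (L * M).
Proof.
  intros Hf Hg e He.
  set (K := 1 + Rabs L + Rabs M).
  assert (HK : 1 <= K) by (unfold K; pose proof (Rabs_pos L); pose proof (Rabs_pos M); lra).
  set (e1 := Rmin 1 (e / K)).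
  assert (He1 : 0 < e1). { apply Rmin_pos. lra. apply Rdiv_lt_0_compat; lra. }
  assert (He1K : e1 * K <= e).
  { assert (e1 <= e / K) by apply Rmin_r. apply (Rmult_le_compat_r K) in H; [|lra].
    unfold Rdiv in H. rewrite Rmult_assoc, Rinv_l in H by lra. lra. }
  assert (He11 : e1 <= 1) by apply Rmin_l.
  destruct (Hf e1 He1) as [d1 [Hd1 H1]].
  destruct (Hg e1 He1) as [d2 [Hd2 H2]].
  exists (Rmin d1 d2). split. apply Rmin_pos; auto.
  intros h Hh Hhd Dh.
  specialize (H1 h Hh (Rlt_le_trans _ _ _ Hhd (Rmin_l _ _)) Dh).
  specialize (H2 h Hh (Rlt_le_trans _ _ _ Hhd (Rmin_r _ _)) Dh).
  replace (f h * g h - L * M) with ((f h - L) * (g h - M) + (f h - L) * M + L * (g h - M)) by ring.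
  eapply Rle_lt_trans. apply Rabs_triang.
  eapply Rle_lt_trans. apply Rplus_le_compat_r. apply Rabs_triang.
  rewrite !Rabs_mult.
  pose proof (Rabs_pos (f h - L)). pose proof (Rabs_pos (g h - M)).
  pose proof (Rabs_pos L). pose proof (Rabs_pos M).
  assert (Rabs (f h - L) * Rabs (g h - M) <= e1 * e1) by (apply Rmult_le_compat; lra).
  assert (Rabs (f h - L) * Rabs M <= e1 * Rabs M) by (apply Rmult_le_compat_r; lra).
  assert (Rabs L * Rabs (g h - M) <= Rabs L * e1) by (apply Rmult_le_compat_l; lra).
  assert (e1 * e1 <= e1 * 1) by (apply Rmult_le_compat_l; lra).
  assert (Rabs (f h - L) * Rabs M < e1 * Rabs M \/ Rabs M = 0).
  { destruct (Req_dec (Rabs M) 0); auto. left. apply Rmult_lt_compat_r; auto. lra. }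
  unfold K in He1K. nra.
Qed.

Lemma lim_sumL D l (F : nat -> R -> R) (L : nat -> R) :
  (forall i, In i l -> lim D (F i) (L i)) ->
  lim D (fun h => sumL l (fun i => F i h)) (sumL l L).
Proof.
  induction l; simpl; intros H.
  - apply lim_const.
  - apply lim_plus; auto.
Qed.

Lemma lim_sum1 D n (F : nat -> R -> R) (L : nat -> R) :
  (forall i, (1 <= i <= n)%nat -> lim D (F i) (L i)) ->
  lim D (fun h => sum1 n (fun i => F i h)) (sum1 n L).
Proof. intros H. rewrite sum1_sumL. eapply lim_ext; [|apply lim_sumL]. exists 1; split; [lra|]; intros; rewrite sum1_sumL; auto. intros i Hi. apply in_seq in Hi. apply H. lia. Qed.

Definition approach (D : R -> Prop) : Prop :=
  forall d, 0 < d -> exists h, h <> 0 /\ Rabs h < d /\ D h.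

Lemma lim_unique D f L M : approach D -> lim D f L -> lim D f M -> L = M.
Proof.
  intros Ha Hf Hg. destruct (Req_dec L M) as [|Hne]; auto. exfalso.
  set (e := Rabs (L - M) / 2).
  assert (He : 0 < e). { unfold e. apply Rdiv_lt_0_compat; [|lra]. apply Rabs_pos_lt. lra. }
  destruct (Hf e He) as [d1 [Hd1 H1]]. destruct (Hg e He) as [d2 [Hd2 H2]].
  destruct (Ha (Rmin d1 d2)) as [h [Hh [Hhd Dh]]]. apply Rmin_pos; auto.
  specialize (H1 h Hh (Rlt_le_trans _ _ _ Hhd (Rmin_l _ _)) Dh).
  specialize (H2 h Hh (Rlt_le_trans _ _ _ Hhd (Rmin_r _ _)) Dh).
  assert (Rabs (L - M) <= Rabs (f h - M) + Rabs (f h - L)).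
  { replace (L - M) with ((f h - M) - (f h - L)) by ring.
    eapply Rle_trans. apply Rabs_triang. rewrite Rabs_Ropp. lra. }
  unfold e in *. lra.
Qed.

Lemma lim_mult_zero D f g : lim D f 0 -> (exists d0 K, 0 < d0 /\ forall h, h <> 0 -> Rabs h < d0 -> D h -> Rabs (g h) <= K) ->
  lim D (fun h => f h * g h) 0.
Proof.
  intros Hf [d0 [K [Hd0 HK]]] e He.
  set (K' := Rabs K + 1).
  destruct (Hf (e / K')) as [d [Hd H]]. apply Rdiv_lt_0_compat; auto. unfold K'; pose proof (Rabs_pos K); lra.
  exists (Rmin d d0). split. apply Rmin_pos; auto.
  intros h Hh Hhd Dh.
  specialize (H h Hh (Rlt_le_trans _ _ _ Hhd (Rmin_l _ _)) Dh).
  specialize (HK h Hh (Rlt_le_trans _ _ _ Hhd (Rmin_r _ _)) Dh).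
  rewrite Rminus_0_r in *. rewrite Rabs_mult.
  assert (Rabs (g h) <= K') by (unfold K'; pose proof (Rle_abs K); lra).
  assert (Hk : 0 < K') by (unfold K'; pose proof (Rabs_pos K); lra).
  assert (Rabs (f h) * K' < e).
  { apply (Rmult_lt_compat_r K') in H; auto. unfold Rdiv in H. rewrite Rmult_assoc, Rinv_l in H by lra. lra. }
  pose proof (Rabs_pos (f h)). pose proof (Rabs_pos (g h)). nra.
Qed.

Definition dom (U : (nat -> R) -> Prop) y m : R -> Prop := fun h => U (upd y m (y m + h)).
Definition dq (F : (nat -> R) -> R) y m : R -> R := fun h => (F (upd y m (y m + h)) - F y) / h.

Lemma hp_lim U F m y l : has_pd U F m y l <-> lim (dom U y m) (dq F y m) l.
Proof. split; intro H; exact H. Qed.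

Lemma hp_cont U F m y l : has_pd U F m y l -> lim (dom U y m) (fun h => F (upd y m (y m + h))) (F y).
Proof.
  intros H. apply hp_lim in H.
  assert (lim (dom U y m) (fun h => F y + h * dq F y m h) (F y + 0 * l)).
  { apply lim_plus. apply lim_const. apply lim_mult; auto. apply lim_id. }
  replace (F y + 0 * l) with (F y) in H0 by ring.
  eapply lim_ext; [|exact H0]. exists 1. split. lra. intros h Hh _ _. unfold dq. field. auto.
Qed.

Ltac lim_ext_tac := exists 1; split; [lra|]; intros ? ? ? ?; unfold dq; field; auto.

Lemma hp_plus U F G m y l1 l2 : has_pd U F m y l1 -> has_pd U G m y l2 ->
  has_pd U (fun z => F z + G z) m y (l1 + l2).
Proof.
  intros H1 H2. apply hp_lim in H1, H2. apply hp_lim.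
  eapply lim_ext; [|apply lim_plus; [exact H1|exact H2]]. lim_ext_tac.
Qed.

Lemma hp_minus U F G m y l1 l2 : has_pd U F m y l1 -> has_pd U G m y l2 ->
  has_pd U (fun z => F z - G z) m y (l1 - l2).
Proof.
  intros H1 H2. apply hp_lim in H1, H2. apply hp_lim.
  eapply lim_ext; [|apply lim_minus; [exact H1|exact H2]]. lim_ext_tac.
Qed.

Lemma hp_scal U F c m y l : has_pd U F m y l -> has_pd U (fun z => c * F z) m y (c * l).
Proof.
  intros H1. apply hp_lim in H1. apply hp_lim.
  eapply lim_ext; [|apply lim_scal; exact H1]. lim_ext_tac.
Qed.

Lemma hp_const U c m y : has_pd U (fun _ => c) m y 0.
Proof.
  apply hp_lim. eapply lim_ext; [|apply lim_const]. lim_ext_tac.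
Qed.

Lemma hp_mult U F G m y l1 l2 : has_pd U F m y l1 -> has_pd U G m y l2 ->
  has_pd U (fun z => F z * G z) m y (l1 * G y + F y * l2).
Proof.
  intros H1 H2. pose proof (hp_cont _ _ _ _ _ H2) as C2. apply hp_lim in H1, H2. apply hp_lim.
  eapply lim_ext; [|apply lim_plus; [apply lim_mult; [exact H1|exact C2]|apply lim_scal; exact H2]].
  lim_ext_tac.
Qed.

Lemma hp_sum1 U n (F : nat -> (nat -> R) -> R) m y (L : nat -> R) :
  (forall i, (1 <= i <= n)%nat -> has_pd U (F i) m y (L i)) ->
  has_pd U (fun z => sum1 n (fun i => F i z)) m y (sum1 n L).
Proof.
  intros H. apply hp_lim.
  eapply lim_ext; [|apply lim_sum1; intros i Hi; apply hp_lim; apply H; exact Hi].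
  exists 1; split; [lra|]; intros h Hh _ _. unfold dq. rewrite <- sum1_minus.
  unfold Rdiv. rewrite <- sum1_scalr. apply sum1_ext. intros; auto.
Qed.

Lemma hp_coord U q m y : has_pd U (fun z => z q) m y (kdelta q m).
Proof.
  apply hp_lim. eapply lim_ext; [|apply lim_const]. exists 1; split; [lra|]. intros h Hh _ _.
  unfold dq, upd, kdelta. destruct (Nat.eqb_spec q m); [subst|]; field; auto.
Qed.

Lemma hp_eq U F m y l l' : has_pd U F m y l -> l = l' -> has_pd U F m y l'.
Proof. intros H ->; auto. Qed.

Definition approachable (U : (nat -> R) -> Prop) y m := approach (dom U y m).

Lemma hp_unique U F m y l1 l2 : approachable U y m -> has_pd U F m y l1 -> has_pd U F m y l2 -> l1 = l2.
Proof. intros Ha H1 H2. apply hp_lim in H1, H2. exact (lim_unique _ _ _ _ Ha H1 H2). Qed.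

Lemma pd_spec U F m y l : approachable U y m -> has_pd U F m y l -> pd U m F y = l.
Proof.
  intros Ha H. unfold pd.
  assert (Hex : exists l, has_pd U F m y l) by eauto.
  pose proof (epsilon_spec (inhabits 0) (has_pd U F m y) Hex) as Hs.
  eapply hp_unique; eauto.
Qed.

Lemma pd_hp U F m y : (exists l, has_pd U F m y l) -> has_pd U F m y (pd U m F y).
Proof. intros Hex. unfold pd. apply epsilon_spec. auto. Qed.

Lemma hp_local U F G m y l :
  (exists d0, 0 < d0 /\ forall h, Rabs h < d0 -> U (upd y m (y m + h)) -> F (upd y m (y m + h)) = G (upd y m (y m + h))) ->
  F y = G y -> has_pd U F m y l -> has_pd U G m y l.
Proof.
  intros [d0 [Hd0 HFG]] Hy H. apply hp_lim in H. apply hp_lim.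
  eapply lim_ext; [|exact H]. exists d0. split; auto. intros h Hh Hhd Dh. unfold dq.
  rewrite HFG, Hy; auto.
Qed.

Lemma pd_local U F G m y :
  (exists d0, 0 < d0 /\ forall h, Rabs h < d0 -> U (upd y m (y m + h)) -> F (upd y m (y m + h)) = G (upd y m (y m + h))) ->
  F y = G y -> pd U m F y = pd U m G y.
Proof.
  intros Hl Hy. unfold pd. f_equal. apply functional_extensionality. intro l.
  apply propositional_extensionality. split; apply hp_local; auto.
  destruct Hl as [d0 [Hd0 HFG]]. exists d0; split; auto. intros; symmetry; auto.
Qed.

Class region (U B : (nat -> R) -> Prop) (Dir : nat -> Prop) : Prop := {
  rg_loc : forall y m, B y -> Dir m -> exists d0, 0 < d0 /\
    forall h, Rabs h < d0 -> U (upd y m (y m + h)) -> B (upd y m (y m + h));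
  rg_app : forall y m, B y -> Dir m -> approachable U y m }.

Section Reg.
Variable (U : (nat -> R) -> Prop) (B : (nat -> R) -> Prop) (Dir : nat -> Prop).
Context {RG : region U B Dir}.

Definition eqB (F G : (nat -> R) -> R) := forall y, B y -> F y = G y.

Lemma hp_extB F G m y l : eqB F G -> B y -> Dir m -> has_pd U F m y l -> has_pd U G m y l.
Proof.
  intros HFG By Dm. apply hp_local; auto.
  destruct (rg_loc y m By Dm) as [d0 [Hd0 H]]. exists d0. split; auto.
Qed.

Lemma pd_extB F G m : Dir m -> eqB F G -> eqB (pd U m F) (pd U m G).
Proof.
  intros Dm HFG y By. apply pd_local; auto.
  destruct (rg_loc y m By Dm) as [d0 [Hd0 H]]. exists d0. split; auto.
Qed.

Lemma pd_specB F m y l : B y -> Dir m -> has_pd U F m y l -> pd U m F y = l.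
Proof. intros By Dm H. apply pd_spec; [apply rg_app; auto|auto]. Qed.

Fixpoint Sk (k : nat) (F : (nat -> R) -> R) : Prop :=
  (forall y m, B y -> Dir m -> exists l, has_pd U F m y l) /\
  match k with O => True | S k' => forall m, Dir m -> Sk k' (pd U m F) end.

Definition Sm F := forall k, Sk k F.

Lemma Sk_0 k F : Sk k F -> Sk 0 F.
Proof. destruct k; simpl; intros [H _]; auto. Qed.

Lemma Sk_hp k F y m : Sk k F -> B y -> Dir m -> has_pd U F m y (pd U m F y).
Proof. intros H By Dm. apply Sk_0 in H. destruct H as [H _]. apply pd_hp. auto. Qed.

Lemma Sk_mono k F : Sk (S k) F -> Sk k F.
Proof.
  revert F. induction k; intros F [H1 H2].
  - simpl; auto.
  - split; [auto|]. intros m Dm. apply IHk. apply H2; auto.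
Qed.

Lemma Sk_ext k F G : eqB F G -> Sk k F -> Sk k G.
Proof.
  revert F G. induction k; intros F G HFG [H1 H2].
  - split; auto. intros y m By Dm. destruct (H1 y m By Dm) as [l Hl]. exists l. eapply hp_extB; eauto.
  - split. intros y m By Dm. destruct (H1 y m By Dm) as [l Hl]. exists l. eapply hp_extB; eauto.
    intros m Dm. apply (IHk (pd U m F)). apply pd_extB; auto. apply H2; auto.
Qed.

Lemma Sm_pd F m : Sm F -> Dir m -> Sm (pd U m F).
Proof. intros H Dm k. destruct (H (S k)) as [_ H2]. apply H2; auto. Qed.

Lemma Sm_hp F y m : Sm F -> B y -> Dir m -> has_pd U F m y (pd U m F y).
Proof. intros H. apply (Sk_hp 0). apply H. Qed.

Lemma Sm_ext F G : eqB F G -> Sm F -> Sm G.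
Proof. intros H HF k. eapply Sk_ext; eauto. Qed.

Lemma pd_constB c m : Dir m -> eqB (pd U m (fun _ => c)) (fun _ => 0).
Proof. intros Dm y By. apply pd_specB; auto. apply hp_const. Qed.

Lemma pd_plusB F G m : Sk 0 F -> Sk 0 G -> Dir m ->
  eqB (pd U m (fun z => F z + G z)) (fun z => pd U m F z + pd U m G z).
Proof. intros HF HG Dm y By. apply pd_specB; auto. apply hp_plus; eapply Sk_hp; eauto. Qed.

Lemma pd_minusB F G m : Sk 0 F -> Sk 0 G -> Dir m ->
  eqB (pd U m (fun z => F z - G z)) (fun z => pd U m F z - pd U m G z).
Proof. intros HF HG Dm y By. apply pd_specB; auto. apply hp_minus; eapply Sk_hp; eauto. Qed.

Lemma pd_scalB c F m : Sk 0 F -> Dir m ->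
  eqB (pd U m (fun z => c * F z)) (fun z => c * pd U m F z).
Proof. intros HF Dm y By. apply pd_specB; auto. apply hp_scal; eapply Sk_hp; eauto. Qed.

Lemma pd_multB F G m : Sk 0 F -> Sk 0 G -> Dir m ->
  eqB (pd U m (fun z => F z * G z)) (fun z => pd U m F z * G z + F z * pd U m G z).
Proof. intros HF HG Dm y By. apply pd_specB; auto. apply hp_mult; eapply Sk_hp; eauto. Qed.

Lemma pd_sum1B n (F : nat -> (nat -> R) -> R) m : (forall i, (1 <= i <= n)%nat -> Sk 0 (F i)) -> Dir m ->
  eqB (pd U m (fun z => sum1 n (fun i => F i z))) (fun z => sum1 n (fun i => pd U m (F i) z)).
Proof. intros HF Dm y By. apply pd_specB; auto. apply hp_sum1. intros i Hi. eapply Sk_hp; eauto. Qed.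

Lemma Sk_const k c : Sk k (fun _ => c).
Proof.
  revert c. induction k; intros c; split; auto; try (intros; exists 0; apply hp_const).
  intros m Dm. eapply Sk_ext. intros y By. symmetry. apply pd_constB; auto. apply IHk.
Qed.

Lemma Sk_plus k F G : Sk k F -> Sk k G -> Sk k (fun z => F z + G z).
Proof.
  revert F G. induction k; intros F G HF HG.
  - split; auto. intros y m By Dm. eexists. apply hp_plus; eapply Sk_hp; eauto.
  - split. intros y m By Dm. eexists. apply hp_plus; eapply Sk_hp; eauto.
    intros m Dm. eapply Sk_ext. intros y By. symmetry. apply pd_plusB; auto; eapply Sk_0; eauto.
    apply IHk. apply HF; auto. apply HG; auto.
Qed.

Lemma Sk_scal k c F : Sk k F -> Sk k (fun z => c * F z).
Proof.
  revert F. induction k; intros F HF.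
  - split; auto. intros y m By Dm. eexists. apply hp_scal; eapply Sk_hp; eauto.
  - split. intros y m By Dm. eexists. apply hp_scal; eapply Sk_hp; eauto.
    intros m Dm. eapply Sk_ext. intros y By. symmetry. apply pd_scalB; auto; eapply Sk_0; eauto.
    apply IHk. apply HF; auto.
Qed.

Lemma Sk_minus k F G : Sk k F -> Sk k G -> Sk k (fun z => F z - G z).
Proof.
  intros HF HG. eapply Sk_ext; [|apply Sk_plus; [exact HF| apply (Sk_scal k (-1)); exact HG]].
  intros y _. ring.
Qed.

Lemma Sk_mult k F G : Sk k F -> Sk k G -> Sk k (fun z => F z * G z).
Proof.
  revert F G. induction k; intros F G HF HG.
  - split; auto. intros y m By Dm. eexists. apply hp_mult; eapply Sk_hp; eauto.
  - split. intros y m By Dm. eexists. apply hp_mult; eapply Sk_hp; eauto.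
    intros m Dm. eapply Sk_ext. intros y By. symmetry. apply pd_multB; auto; eapply Sk_0; eauto.
    apply Sk_plus; apply IHk.
    apply HF; auto. apply Sk_mono; auto. apply Sk_mono; auto. apply HG; auto.
Qed.

Lemma Sk_sum1 k n (F : nat -> (nat -> R) -> R) : (forall i, (1 <= i <= n)%nat -> Sk k (F i)) ->
  Sk k (fun z => sum1 n (fun i => F i z)).
Proof.
  revert F. induction k; intros F HF.
  - split; auto. intros y m By Dm. eexists. apply hp_sum1. intros i Hi. eapply Sk_hp; eauto.
  - split. intros y m By Dm. eexists. apply hp_sum1. intros i Hi. eapply Sk_hp; eauto.
    intros m Dm. eapply Sk_ext. intros y By. symmetry. apply pd_sum1B; auto. intros; eapply Sk_0; eauto.
    apply (IHk (fun i => pd U m (F i))). intros i Hi. apply HF; auto.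
Qed.

Lemma Sm_const c : Sm (fun _ => c).
Proof. intro k. apply Sk_const. Qed.
Lemma Sm_plus F G : Sm F -> Sm G -> Sm (fun z => F z + G z).
Proof. intros HF HG k. apply Sk_plus; auto. Qed.
Lemma Sm_minus F G : Sm F -> Sm G -> Sm (fun z => F z - G z).
Proof. intros HF HG k. apply Sk_minus; auto. Qed.
Lemma Sm_scal c F : Sm F -> Sm (fun z => c * F z).
Proof. intros HF k. apply Sk_scal; auto. Qed.
Lemma Sm_mult F G : Sm F -> Sm G -> Sm (fun z => F z * G z).
Proof. intros HF HG k. apply Sk_mult; auto. Qed.
Lemma Sm_sum1 n (F : nat -> (nat -> R) -> R) : (forall i, (1 <= i <= n)%nat -> Sm (F i)) ->
  Sm (fun z => sum1 n (fun i => F i z)).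
Proof. intros HF k. apply Sk_sum1; auto. intros; apply HF; auto. Qed.
Lemma Sm_0 F : Sm F -> Sk 0 F.
Proof. intros H; apply H. Qed.

(* vanishing order at a base point p *)
Variable p : nat -> R.
Hypothesis Bp : B p.

Fixpoint Zk (k : nat) (F : (nat -> R) -> R) : Prop :=
  match k with O => True | S k' => F p = 0 /\ forall m, Dir m -> Zk k' (pd U m F) end.

Lemma Z_val k F : Zk (S k) F -> F p = 0.
Proof. intros [H _]; auto. Qed.

Lemma Z_pd k F m : Zk (S k) F -> Dir m -> Zk k (pd U m F).
Proof. intros [_ H] Dm; auto. Qed.

Lemma Z_ext k F G : eqB F G -> Zk k F -> Zk k G.
Proof.
  revert F G. induction k; intros F G HFG HF; simpl; auto.
  destruct HF as [H1 H2]. split. rewrite <- HFG; auto.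
  intros m Dm. apply (IHk (pd U m F)). apply pd_extB; auto. apply H2; auto.
Qed.

Lemma Z_mono k F : Zk (S k) F -> Zk k F.
Proof.
  revert F. induction k; intros F HF; simpl; auto.
  destruct HF as [H1 H2]. split; [auto|]. intros m Dm. apply IHk. apply H2; auto.
Qed.

Lemma Z_mono_le j k F : (j <= k)%nat -> Zk k F -> Zk j F.
Proof. intros H. induction H; auto. intros Hz. apply IHle. apply Z_mono; auto. Qed.

Lemma Z_const0 k : Zk k (fun _ => 0).
Proof.
  induction k; simpl; auto. split; [auto|]. intros m Dm. eapply Z_ext; [|exact IHk].
  intros y By. symmetry. apply pd_constB; auto.
Qed.

Lemma Z_plus k F G : Sm F -> Sm G -> Zk k F -> Zk k G -> Zk k (fun z => F z + G z).
Proof.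
  revert F G. induction k; intros F G SF SG HF HG; simpl; auto.
  destruct HF as [F1 F2], HG as [G1 G2]. split. rewrite F1, G1; ring.
  intros m Dm. eapply Z_ext. intros y By. symmetry. apply pd_plusB; auto.
  apply IHk; try apply Sm_pd; auto.
Qed.

Lemma Z_scal k c F : Sm F -> Zk k F -> Zk k (fun z => c * F z).
Proof.
  revert F. induction k; intros F SF HF; simpl; auto.
  destruct HF as [F1 F2]. split. rewrite F1; ring.
  intros m Dm. eapply Z_ext. intros y By. symmetry. apply pd_scalB; auto.
  apply IHk; try apply Sm_pd; auto.
Qed.

Lemma Z_minus k F G : Sm F -> Sm G -> Zk k F -> Zk k G -> Zk k (fun z => F z - G z).
Proof.
  intros SF SG HF HG. eapply Z_ext; [|apply Z_plus; [exact SF|apply (Sm_scal (-1)); exact SG|exact HF|apply Z_scal; auto]].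
  intros y _. ring.
Qed.

Lemma Z_sum1 k n (F : nat -> (nat -> R) -> R) : (forall i, (1 <= i <= n)%nat -> Sm (F i)) ->
  (forall i, (1 <= i <= n)%nat -> Zk k (F i)) -> Zk k (fun z => sum1 n (fun i => F i z)).
Proof.
  revert F. induction k; intros F SF HF; simpl; auto. split.
  rewrite <- (sum1_zero n). apply sum1_ext. intros i Hi. apply (HF i Hi).
  intros m Dm. eapply Z_ext. intros y By. symmetry. apply pd_sum1B; auto. intros; apply Sm_0; auto.
  apply (IHk (fun i => pd U m (F i))). intros; apply Sm_pd; auto. intros i Hi. apply (HF i Hi); auto.
Qed.

Lemma Z_mult N : forall j k F G, (j + k = N)%nat -> Sm F -> Sm G -> Zk j F -> Zk k G ->
  Zk N (fun z => F z * G z).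
Proof.
  induction N; intros j k F G Hjk SF SG HF HG; simpl; auto. split.
  - destruct j. simpl in Hjk. subst k. rewrite (Z_val _ _ HG). ring.
    rewrite (Z_val _ _ HF). ring.
  - intros m Dm. eapply Z_ext. intros y By. symmetry. apply pd_multB; auto; apply Sm_0; auto.
    apply Z_plus; try (apply Sm_mult; auto; apply Sm_pd; auto).
    + destruct j.
      * simpl in Hjk. subst k. apply (IHN 0%nat N); simpl; auto. apply Sm_pd; auto. apply Z_mono; auto.
      * apply (IHN j k). simpl in Hjk; lia. apply Sm_pd; auto. auto. apply Z_pd; auto. auto.
    + destruct k.
      * rewrite Nat.add_0_r in Hjk. subst j. apply (IHN N 0%nat). lia. auto. apply Sm_pd; auto. apply Z_mono; auto. simpl; auto.
      * apply (IHN j k). lia. auto. apply Sm_pd; auto. auto. apply Z_pd; auto.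
Qed.

Lemma pd2_mult_at F G a b : Sm F -> Sm G -> Dir a -> Dir b ->
  pd U a (pd U b (fun z => F z * G z)) p =
  pd U a (pd U b F) p * G p + pd U b F p * pd U a G p + pd U a F p * pd U b G p + F p * pd U a (pd U b G) p.
Proof.
  intros SF SG Da Db.
  rewrite (pd_extB _ _ a Da (pd_multB F G b (Sm_0 _ SF) (Sm_0 _ SG) Db) p Bp).
  apply pd_specB; auto.
  eapply hp_eq. apply hp_plus; apply hp_mult; apply Sm_hp; auto; apply Sm_pd; auto.
  ring.
Qed.

Lemma pd2_plus_at F G a b : Sm F -> Sm G -> Dir a -> Dir b ->
  pd U a (pd U b (fun z => F z + G z)) p = pd U a (pd U b F) p + pd U a (pd U b G) p.
Proof.
  intros SF SG Da Db.
  rewrite (pd_extB _ _ a Da (pd_plusB F G b (Sm_0 _ SF) (Sm_0 _ SG) Db) p Bp).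
  apply pd_specB; auto. apply hp_plus; apply Sm_hp; auto; apply Sm_pd; auto.
Qed.

End Reg.

Section Reg2.
Variable (U : (nat -> R) -> Prop) (B : (nat -> R) -> Prop) (Dir : nat -> Prop).
Context {RG : region U B Dir}.

Lemma Sm_from_pd F : (forall y m, B y -> Dir m -> exists l, has_pd U F m y l) ->
  (forall m, Dir m -> exists G, eqB B (pd U m F) G /\ Sm U B Dir G) -> Sm U B Dir F.
Proof.
  intros H1 H2 k. destruct k. split; auto.
  split; auto. intros m Dm. destruct (H2 m Dm) as [G [HG SG]].
  apply (Sk_ext U B Dir k G). intros y By; symmetry; auto. apply SG.
Qed.

Variable p : nat -> R.
Hypothesis Bp : B p.

Lemma pd_at_plus F G m : Sm U B Dir F -> Sm U B Dir G -> Dir m ->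
  pd U m (fun z => F z + G z) p = pd U m F p + pd U m G p.
Proof. intros. apply (pd_plusB U B Dir); auto; apply Sm_0; auto. Qed.
Lemma pd_at_minus F G m : Sm U B Dir F -> Sm U B Dir G -> Dir m ->
  pd U m (fun z => F z - G z) p = pd U m F p - pd U m G p.
Proof. intros. apply (pd_minusB U B Dir); auto; apply Sm_0; auto. Qed.
Lemma pd_at_scal c F m : Sm U B Dir F -> Dir m -> pd U m (fun z => c * F z) p = c * pd U m F p.
Proof. intros. apply (pd_scalB U B Dir); auto; apply Sm_0; auto. Qed.
Lemma pd_at_sum1 n (F : nat -> (nat -> R) -> R) m : (forall i, (1 <= i <= n)%nat -> Sm U B Dir (F i)) -> Dir m ->
  pd U m (fun z => sum1 n (fun i => F i z)) p = sum1 n (fun i => pd U m (F i) p).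
Proof. intros. apply (pd_sum1B U B Dir); auto. intros; apply Sm_0; auto. Qed.

Lemma pd2_at_ext F G a b : Dir a -> Dir b -> eqB B F G -> pd U a (pd U b F) p = pd U a (pd U b G) p.
Proof. intros Da Db H. apply (pd_extB U B Dir); auto. apply (pd_extB U B Dir); auto. Qed.

Lemma pd2_at_minus F G a b : Sm U B Dir F -> Sm U B Dir G -> Dir a -> Dir b ->
  pd U a (pd U b (fun z => F z - G z)) p = pd U a (pd U b F) p - pd U a (pd U b G) p.
Proof.
  intros SF SG Da Db.
  rewrite (pd_extB U B Dir _ _ a Da (pd_minusB U B Dir F G b (Sm_0 _ _ _ _ SF) (Sm_0 _ _ _ _ SG) Db) p Bp).
  apply pd_at_minus; auto; apply Sm_pd; auto.
Qed.

Lemma pd2_at_scal c F a b : Sm U B Dir F -> Dir a -> Dir b ->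
  pd U a (pd U b (fun z => c * F z)) p = c * pd U a (pd U b F) p.
Proof.
  intros SF Da Db.
  rewrite (pd_extB U B Dir _ _ a Da (pd_scalB U B Dir c F b (Sm_0 _ _ _ _ SF) Db) p Bp).
  apply pd_at_scal; auto; apply Sm_pd; auto.
Qed.

Lemma pd2_at_sum1 n (F : nat -> (nat -> R) -> R) a b : (forall i, (1 <= i <= n)%nat -> Sm U B Dir (F i)) -> Dir a -> Dir b ->
  pd U a (pd U b (fun z => sum1 n (fun i => F i z))) p = sum1 n (fun i => pd U a (pd U b (F i)) p).
Proof.
  intros SF Da Db.
  rewrite (pd_extB U B Dir _ _ a Da (pd_sum1B U B Dir n F b (fun i Hi => Sm_0 _ _ _ _ (SF i Hi)) Db) p Bp).
  apply (pd_at_sum1 n (fun i => pd U b (F i))); auto. intros; apply Sm_pd; auto.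
Qed.

Lemma pd2_at_const c a b : Dir a -> Dir b -> pd U a (pd U b (fun _ => c)) p = 0.
Proof.
  intros Da Db. rewrite (pd_extB U B Dir _ _ a Da (pd_constB U B Dir c b Db) p Bp).
  apply (pd_constB U B Dir); auto.
Qed.

Lemma Z2_pd2 F a b : Zk U Dir p 3 F -> Dir a -> Dir b -> pd U a (pd U b F) p = 0.
Proof. intros HZ Da Db. apply (Z_val U Dir p 0). apply Z_pd; auto. apply Z_pd; auto. Qed.
End Reg2.

Definition clamp a b x := Rmax a (Rmin b x).

Lemma clamp_in a b x : a <= b -> a <= clamp a b x <= b.
Proof. intros. unfold clamp, Rmax, Rmin. repeat destruct Rle_dec; lra. Qed.
Lemma clamp_id a b x : a <= x <= b -> clamp a b x = x.
Proof. intros. unfold clamp, Rmax, Rmin. repeat destruct Rle_dec; lra. Qed.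
Lemma clamp_lip a b x c : a <= b -> a <= c <= b -> Rabs (clamp a b x - c) <= Rabs (x - c).
Proof. intros. unfold clamp, Rmax, Rmin. repeat destruct Rle_dec; unfold Rabs; repeat destruct Rcase_abs; lra. Qed.

Lemma mvt1 (f f' : R -> R) a b : a < b ->
  (forall c, a < c < b -> derivable_pt_lim f c (f' c)) ->
  (forall c, a <= c <= b -> forall eps, 0 < eps -> exists d, 0 < d /\
     forall x, a <= x <= b -> Rabs (x - c) < d -> Rabs (f x - f c) < eps) ->
  exists c, a < c < b /\ f b - f a = f' c * (b - a).
Proof.
  intros Hab Hd Hc.
  set (g := fun x => f (clamp a b x)).
  assert (Hg : forall c, a < c < b -> derivable_pt_lim g c (f' c)).
  { intros c Hcab eps He. destruct (Hd c Hcab eps He) as [d Hdd].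
    assert (Hm : 0 < Rmin d (Rmin (c - a) (b - c))).
    { apply Rmin_pos. apply cond_pos. apply Rmin_pos; lra. }
    exists (mkposreal _ Hm). intros h Hh Hhd. simpl in Hhd.
    unfold g. rewrite (clamp_id a b (c + h)), (clamp_id a b c) by
      (try (split; lra); pose proof (Rmin_r d (Rmin (c-a) (b-c))); pose proof (Rmin_l (c-a) (b-c));
       pose proof (Rmin_r (c-a) (b-c)); unfold Rabs in Hhd; destruct Rcase_abs in Hhd; split; lra).
    apply Hdd; auto. eapply Rlt_le_trans; [exact Hhd|apply Rmin_l]. }
  assert (pr1 : forall c, a < c < b -> derivable_pt g c).
  { intros c Hcab. exists (f' c). apply Hg; auto. }
  assert (pr2 : forall c, a < c < b -> derivable_pt id c).
  { intros c _. apply derivable_pt_id. }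
  assert (Hcg : forall c, a <= c <= b -> continuity_pt g c).
  { intros c Hcab. unfold continuity_pt, continue_in, limit1_in, limit_in. simpl. unfold R_dist.
    intros eps He. destruct (Hc c Hcab eps He) as [d [Hd0 Hdd]]. exists d. split; auto.
    intros x [_ Hx]. unfold g. rewrite (clamp_id a b c) by lra.
    apply Hdd. apply clamp_in; lra. eapply Rle_lt_trans; [apply clamp_lip; lra|auto]. }
  assert (Hci : forall c, a <= c <= b -> continuity_pt id c).
  { intros. apply derivable_continuous_pt. apply derivable_pt_id. }
  destruct (MVT g id a b pr1 pr2 Hab Hcg Hci) as [c [P HP]].
  exists c. split; auto.
  rewrite (derive_pt_eq_0 g c (f' c) (pr1 c P) (Hg c P)) in HP.
  rewrite (derive_pt_eq_0 id c 1 (pr2 c P)) in HP by apply derivable_pt_lim_id.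
  unfold g, id in HP. rewrite !clamp_id in HP by lra. lra.
Qed.

Lemma hp_dpl U G m z l (P : R -> (nat -> R)) s0 : has_pd U G m z l ->
  (exists d0, 0 < d0 /\ forall h, Rabs h < d0 -> U (upd z m (z m + h))) ->
  (forall h, upd z m (z m + h) = P (s0 + h)) -> z = P s0 ->
  derivable_pt_lim (fun s => G (P s)) s0 l.
Proof.
  intros H [d0 [Hd0 Hdom]] HP Hz eps He.
  destruct (H eps He) as [d [Hd Hdd]].
  assert (Hm : 0 < Rmin d d0) by (apply Rmin_pos; auto).
  exists (mkposreal _ Hm). intros h Hh Hhd. simpl in Hhd.
  rewrite <- HP, <- Hz. apply Hdd; auto. eapply Rlt_le_trans; [exact Hhd|apply Rmin_l].
  apply Hdom. eapply Rlt_le_trans; [exact Hhd|apply Rmin_r].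
Qed.

Lemma hp_cont1 U G m z l (P : R -> (nat -> R)) s0 : has_pd U G m z l ->
  (forall h, upd z m (z m + h) = P (s0 + h)) -> z = P s0 ->
  forall eps, 0 < eps -> exists d, 0 < d /\ forall h, Rabs h < d -> U (P (s0 + h)) ->
    Rabs (G (P (s0 + h)) - G (P s0)) < eps.
Proof.
  intros H HP Hz eps He. apply hp_cont in H. destruct (H eps He) as [d [Hd Hdd]].
  exists d. split; auto. intros h Hh Uh.
  destruct (Req_dec h 0) as [->|Hn0].
  - rewrite Rplus_0_r, Rminus_diag, Rabs_R0. auto.
  - rewrite <- HP, <- Hz. apply Hdd; auto. unfold dom. rewrite HP; auto.
Qed.

Section Schwarz.
Variables (n : nat) (T : R) (V : (nat -> R) -> Prop).
Hypothesis HV : open_nbhd0 n V.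
Let U := domain T V.
Variable F : (nat -> R) -> R.
Variable b : nat.
Hypothesis Hb : (1 <= b <= n)%nat.
Hypothesis HF0 : forall z, U z -> has_pd U F 0 z (pd U 0 F z).
Hypothesis HFb : forall z, U z -> has_pd U F b z (pd U b F z).
Hypothesis H0b : forall z, U z -> has_pd U (pd U 0 F) b z (pd U b (pd U 0 F) z).
Hypothesis Hb0 : forall z, U z -> has_pd U (pd U b F) 0 z (pd U 0 (pd U b F) z).
Hypothesis C1 : cont_on n U (pd U b (pd U 0 F)).
Hypothesis C2 : cont_on n U (pd U 0 (pd U b F)).

Variable y : nat -> R.
Hypothesis Uy : U y.

Definition W x u := upd (upd y b (y b + u)) 0 x.

Lemma W_0 x u h : upd (W x u) 0 (W x u 0 + h) = W (x + h) u.
Proof. unfold W. rewrite upd_at, upd_upd. auto. Qed.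

Lemma W_b x u h : upd (W x u) b (W x u b + h) = W x (u + h).
Proof.
  unfold W. apply functional_extensionality. intro k. unfold upd.
  destruct (Nat.eqb_spec k b), (Nat.eqb_spec k 0), (Nat.eqb_spec b 0); subst; try lia; try ring.
  rewrite Nat.eqb_refl. ring.
Qed.

Lemma W_y : W (y 0) 0 = y.
Proof.
  unfold W. rewrite Rplus_0_r, upd_same, upd_same. auto.
Qed.

Lemma W_coord0 x u : W x u 0 = x.
Proof. unfold W. apply upd_at. Qed.
Lemma W_coordb x u : W x u b = y b + u.
Proof. unfold W. rewrite upd_other by lia. apply upd_at. Qed.
Lemma W_coordk x u k : k <> 0%nat -> k <> b -> W x u k = y k.
Proof. intros. unfold W. rewrite !upd_other; auto. Qed.


Section Route.
Variable rho : R.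
Hypothesis Hrho : 0 < rho.
Hypothesis HUW : forall x u, y 0 <= x <= y 0 + rho -> 0 <= u <= rho -> U (W x u).

Lemma dpl_t G x u : (forall z, U z -> has_pd U G 0 z (pd U 0 G z)) -> y 0 < x < y 0 + rho -> 0 <= u <= rho ->
  derivable_pt_lim (fun x => G (W x u)) x (pd U 0 G (W x u)).
Proof.
  intros HG Hx Hu.
  eapply (hp_dpl U G 0 (W x u) _ (fun x => W x u) x).
  - apply HG; apply HUW; lra.
  - exists (Rmin (x - y 0) (y 0 + rho - x)); split; [apply Rmin_pos; lra|].
    intros h Hh. rewrite W_0. apply HUW; [|lra].
    pose proof (Rmin_l (x - y 0) (y 0 + rho - x)); pose proof (Rmin_r (x - y 0) (y 0 + rho - x)).
    unfold Rabs in Hh; destruct Rcase_abs in Hh; lra.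
  - intros h. rewrite W_0; auto.
  - auto.
Qed.

Lemma dpl_b G x u : (forall z, U z -> has_pd U G b z (pd U b G z)) -> y 0 <= x <= y 0 + rho -> 0 < u < rho ->
  derivable_pt_lim (fun u => G (W x u)) u (pd U b G (W x u)).
Proof.
  intros HG Hx Hu.
  eapply (hp_dpl U G b (W x u) _ (fun u => W x u) u).
  - apply HG; apply HUW; lra.
  - exists (Rmin u (rho - u)); split; [apply Rmin_pos; lra|].
    intros h Hh. rewrite W_b. apply HUW; [lra|].
    pose proof (Rmin_l u (rho - u)); pose proof (Rmin_r u (rho - u)).
    unfold Rabs in Hh; destruct Rcase_abs in Hh; lra.
  - intros h. rewrite W_b. auto.
  - auto.
Qed.

Lemma cont_t G u : (forall z, U z -> has_pd U G 0 z (pd U 0 G z)) -> 0 <= u <= rho ->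
  forall c, y 0 <= c <= y 0 + rho -> forall eps, 0 < eps -> exists d, 0 < d /\
     forall x, y 0 <= x <= y 0 + rho -> Rabs (x - c) < d -> Rabs (G (W x u) - G (W c u)) < eps.
Proof.
  intros HG Hu c Hc eps He.
  destruct (hp_cont1 U G 0 (W c u) _ (fun x => W x u) c (HG _ (HUW _ _ Hc Hu)) (fun h => W_0 c u h) eq_refl eps He)
    as [d [Hd Hdd]].
  exists d. split; auto. intros x Hx Hxc. specialize (Hdd (x - c)).
    replace (c + (x - c)) with x in Hdd by ring. apply Hdd; auto.
Qed.

Lemma cont_b G x : (forall z, U z -> has_pd U G b z (pd U b G z)) -> y 0 <= x <= y 0 + rho ->
  forall c, 0 <= c <= rho -> forall eps, 0 < eps -> exists d, 0 < d /\
     forall u, 0 <= u <= rho -> Rabs (u - c) < d -> Rabs (G (W x u) - G (W x c)) < eps.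
Proof.
  intros HG Hx c Hc eps He.
  destruct (hp_cont1 U G b (W x c) _ (fun u => W x u) c (HG _ (HUW _ _ Hx Hc)) (fun h => W_b x c h) eq_refl eps He)
    as [d [Hd Hdd]].
  exists d. split; auto. intros u Hu Huc. specialize (Hdd (u - c)).
    replace (c + (u - c)) with u in Hdd by ring. apply Hdd; auto.
Qed.

Lemma cont_minus (f g : R -> R) a b' :
  (forall c, a <= c <= b' -> forall eps, 0 < eps -> exists d, 0 < d /\
     forall x, a <= x <= b' -> Rabs (x - c) < d -> Rabs (f x - f c) < eps) ->
  (forall c, a <= c <= b' -> forall eps, 0 < eps -> exists d, 0 < d /\
     forall x, a <= x <= b' -> Rabs (x - c) < d -> Rabs (g x - g c) < eps) ->
  (forall c, a <= c <= b' -> forall eps, 0 < eps -> exists d, 0 < d /\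
     forall x, a <= x <= b' -> Rabs (x - c) < d -> Rabs ((f x - g x) - (f c - g c)) < eps).
Proof.
  intros Hf Hg c Hc eps He.
  destruct (Hf c Hc (eps/2)) as [d1 [Hd1 H1]]; [lra|].
  destruct (Hg c Hc (eps/2)) as [d2 [Hd2 H2]]; [lra|].
  exists (Rmin d1 d2); split; [apply Rmin_pos; auto|]. intros x Hx Hxc.
  specialize (H1 x Hx (Rlt_le_trans _ _ _ Hxc (Rmin_l _ _))).
  specialize (H2 x Hx (Rlt_le_trans _ _ _ Hxc (Rmin_r _ _))).
  replace (f x - g x - (f c - g c)) with ((f x - f c) - (g x - g c)) by ring.
  eapply Rle_lt_trans; [apply Rabs_triang|]. rewrite Rabs_Ropp. lra.
Qed.

Definition Dl := F (W (y 0 + rho) rho) - F (W (y 0 + rho) 0) - F (W (y 0) rho) + F (W (y 0) 0).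

Lemma routeA : exists c e, y 0 < c < y 0 + rho /\ 0 < e < rho /\
  Dl = rho * rho * pd U b (pd U 0 F) (W c e).
Proof.
  destruct (mvt1 (fun x => F (W x rho) - F (W x 0)) (fun x => pd U 0 F (W x rho) - pd U 0 F (W x 0)) (y 0) (y 0 + rho))
    as [c [Hc Hmv]].
  - lra.
  - intros c Hc. apply derivable_pt_lim_minus; apply dpl_t; auto; lra.
  - apply cont_minus; apply cont_t; auto; lra.
  - destruct (mvt1 (fun u => pd U 0 F (W c u)) (fun u => pd U b (pd U 0 F) (W c u)) 0 rho)
      as [e [He Hmv2]].
    + lra.
    + intros e He. apply dpl_b; auto; lra.
    + apply cont_b; auto; lra.
    + exists c, e. split; auto. split; auto. unfold Dl. simpl in Hmv, Hmv2.
      replace (F (W (y 0 + rho) rho) - F (W (y 0 + rho) 0) - F (W (y 0) rho) + F (W (y 0) 0))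
        with (F (W (y 0 + rho) rho) - F (W (y 0 + rho) 0) - (F (W (y 0) rho) - F (W (y 0) 0))) by ring.
      rewrite Hmv. rewrite Hmv2. ring.
Qed.

Lemma routeB : exists c e, y 0 < c < y 0 + rho /\ 0 < e < rho /\
  Dl = rho * rho * pd U 0 (pd U b F) (W c e).
Proof.
  destruct (mvt1 (fun u => F (W (y 0 + rho) u) - F (W (y 0) u)) (fun u => pd U b F (W (y 0 + rho) u) - pd U b F (W (y 0) u)) 0 rho)
    as [e [He Hmv]].
  - lra.
  - intros e He. apply derivable_pt_lim_minus; apply dpl_b; auto; lra.
  - apply cont_minus; apply cont_b; auto; lra.
  - destruct (mvt1 (fun x => pd U b F (W x e)) (fun x => pd U 0 (pd U b F) (W x e)) (y 0) (y 0 + rho))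
      as [c [Hc Hmv2]].
    + lra.
    + intros c Hc. apply dpl_t; auto; lra.
    + apply cont_t; auto; lra.
    + exists c, e. split; auto. split; auto. unfold Dl. simpl in Hmv, Hmv2.
      replace (F (W (y 0 + rho) rho) - F (W (y 0 + rho) 0) - F (W (y 0) rho) + F (W (y 0) 0))
        with (F (W (y 0 + rho) rho) - F (W (y 0) rho) - (F (W (y 0 + rho) 0) - F (W (y 0) 0))) by ring.
      rewrite Hmv. replace (y 0 + rho - y 0) with rho in Hmv2 by ring. rewrite Hmv2. ring.
Qed.
End Route.

Lemma schwarz : pd U 0 (pd U b F) y = pd U b (pd U 0 F) y.
Proof.
  destruct HV as [HV0 [HVinv HVop]].
  pose proof Uy as [Uy0 Vy].
  destruct (HVop y Vy) as [ry [Hry Hryz]].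
  set (A := pd U 0 (pd U b F) y). set (Bv := pd U b (pd U 0 F) y).
  destruct (Req_dec A Bv) as [|Hne]; auto. exfalso.
  set (eps := Rabs (A - Bv) / 3).
  assert (He : 0 < eps) by (unfold eps; apply Rdiv_lt_0_compat; [apply Rabs_pos_lt; lra|lra]).
  destruct (C1 y Uy eps He) as [d1 [Hd1 H1]].
  destruct (C2 y Uy eps He) as [d2 [Hd2 H2]].
  set (rho := Rmin (Rmin d1 d2) (Rmin ry (T - y 0)) / 2).
  assert (Hrho : 0 < rho) by (unfold rho; apply Rdiv_lt_0_compat; [|lra]; repeat apply Rmin_pos; lra).
  assert (Hr1 : rho < d1) by (unfold rho; pose proof (Rmin_l (Rmin d1 d2) (Rmin ry (T - y 0)));
         pose proof (Rmin_l d1 d2); lra).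
  assert (Hr2 : rho < d2) by (unfold rho; pose proof (Rmin_l (Rmin d1 d2) (Rmin ry (T - y 0)));
         pose proof (Rmin_r d1 d2); lra).
  assert (Hr3 : rho < ry) by (unfold rho; pose proof (Rmin_r (Rmin d1 d2) (Rmin ry (T - y 0)));
         pose proof (Rmin_l ry (T - y 0)); lra).
  assert (Hr4 : y 0 + rho < T) by (unfold rho; pose proof (Rmin_r (Rmin d1 d2) (Rmin ry (T - y 0)));
         pose proof (Rmin_r ry (T - y 0)); lra).
  assert (HUW : forall x u, y 0 <= x <= y 0 + rho -> 0 <= u <= rho -> U (W x u)).
  { intros x u Hx Hu. split. rewrite W_coord0. lra.
    apply Hryz. intros k Hk. destruct (Nat.eq_dec k b) as [->|Hkb].
    rewrite W_coordb. replace (y b + u - y b) with u by ring. unfold Rabs; destruct Rcase_abs; lra.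
    rewrite W_coordk by lia. rewrite Rminus_diag, Rabs_R0. auto. }
  assert (Hclose : forall d x u, rho < d -> y 0 <= x <= y 0 + rho -> 0 <= u <= rho ->
          forall k, (k <= n)%nat -> Rabs (W x u k - y k) < d).
  { intros d x u Hd Hx Hu k Hk. destruct (Nat.eq_dec k 0) as [->|Hk0].
    rewrite W_coord0; unfold Rabs; destruct Rcase_abs; lra.
    destruct (Nat.eq_dec k b) as [->|Hkb].
    rewrite W_coordb; replace (y b + u - y b) with u by ring; unfold Rabs; destruct Rcase_abs; lra.
    rewrite W_coordk by auto; rewrite Rminus_diag, Rabs_R0; lra. }
  destruct (routeA rho Hrho HUW) as [c [e [Hc [He' HA]]]].
  destruct (routeB rho Hrho HUW) as [c' [e' [Hc' [He'' HB]]]].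
  assert (Heq : pd U b (pd U 0 F) (W c e) = pd U 0 (pd U b F) (W c' e')).
  { assert (rho * rho <> 0) by (apply Rmult_integral_contrapositive; lra).
    apply (Rmult_eq_reg_l (rho * rho)); auto. rewrite <- HA, <- HB. auto. }
  assert (X1 : Rabs (pd U b (pd U 0 F) (W c e) - Bv) < eps).
  { apply H1. apply HUW; lra. intros k Hk. apply Hclose; auto; lra. }
  assert (X2 : Rabs (pd U 0 (pd U b F) (W c' e') - A) < eps).
  { apply H2. apply HUW; lra. intros k Hk. apply Hclose; auto; lra. }
  rewrite Heq in X1.
  assert (Rabs (A - Bv) <= Rabs (pd U 0 (pd U b F) (W c' e') - A) + Rabs (pd U 0 (pd U b F) (W c' e') - Bv)).
  { replace (A - Bv) with (- (pd U 0 (pd U b F) (W c' e') - A) + (pd U 0 (pd U b F) (W c' e') - Bv)) by ring.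
    eapply Rle_trans; [apply Rabs_triang|]. rewrite Rabs_Ropp. lra. }
  unfold eps in *. lra.
Qed.
End Schwarz.

Ltac ap H := apply H; try typeclasses eauto.
Ltac eap H := eapply H; try typeclasses eauto.

Lemma Rabs_kdelta i k : Rabs (kdelta i k) = kdelta k i * 1.
Proof. unfold kdelta. destruct (Nat.eqb_spec i k), (Nat.eqb_spec k i); try lia; rewrite ?Rabs_R1, ?Rabs_R0; ring. Qed.

Lemma sumL_ge_term l F k : (forall x, 0 <= F x) -> In k l -> F k <= sumL l F.
Proof.
  intros HF. induction l; simpl; intros Hin. contradiction.
  destruct Hin as [->|Hin].
  - assert (0 <= sumL l F). { pose proof (sumL_le l (fun _ => 0) F). rewrite sumL_zero in H. apply H. auto. }
    lra.
  - pose proof (HF a). pose proof (IHl Hin). lra.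
Qed.

Lemma sum1_ge_term n F k : (forall x, 0 <= F x) -> (1 <= k <= n)%nat -> F k <= sum1 n F.
Proof. intros HF Hk. rewrite sum1_sumL. apply sumL_ge_term; auto. apply in_seq. lia. Qed.

Section Main.
Variables (n : nat) (Hn : (2 <= n)%nat) (a : nat -> nat -> R) (T : R) (HT : 0 < T)
  (V : (nat -> R) -> Prop) (HV : open_nbhd0 n V) (g ginv : (nat -> R) -> nat -> nat -> R)
  (Hflow : ricci_flow n (domain T V) g ginv)
  (Hinit : forall y, domain T V y -> y 0%nat = 0 ->
     forall i j, (1 <= i <= n)%nat -> (1 <= j <= n)%nat ->
     g y i j = graph_metric n a y i j).

Let U := domain T V.

Variable r : R.
Hypothesis Hr : 0 < r.
Hypothesis HrT : r <= T.
Hypothesis HrV : forall z, (forall k, (1 <= k <= n)%nat -> Rabs (z k) < r) -> V z.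

Definition Box z := 0 <= z 0%nat < r /\ forall k, (1 <= k <= n)%nat -> Rabs (z k) < r.
Definition Slice z := z 0%nat = 0 /\ forall k, (1 <= k <= n)%nat -> Rabs (z k) < r.
Definition Dir0 m := (m <= n)%nat.
Definition Dir1 m := (1 <= m <= n)%nat.

Hypothesis Hrg : forall z, Box z -> forall i j, (1 <= i <= n)%nat -> (1 <= j <= n)%nat ->
  Rabs (g z i j - kdelta i j) <= / (4 * INR n).

Lemma Box_U z : Box z -> U z.
Proof. intros [H1 H2]. split. lra. apply HrV. auto. Qed.
Lemma Slice_Box z : Slice z -> Box z.
Proof. intros [H1 H2]. split; auto. lra. Qed.
Lemma Box_coord z m : Box z -> (m <= n)%nat -> Rabs (z m) < r.
Proof. intros [H1 H2] Hm. destruct m. rewrite Rabs_right; lra. apply H2. lia. Qed.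
Lemma origin_Slice : Slice origin.
Proof. split. reflexivity. intros. unfold origin. rewrite Rabs_R0. auto. Qed.
Lemma origin_Box : Box origin.
Proof. apply Slice_Box, origin_Slice. Qed.

Lemma Box_upd y m h : Box y -> (m <= n)%nat -> Rabs h < r - Rabs (y m) -> (m = 0%nat -> 0 <= y 0%nat + h) ->
  Box (upd y m (y m + h)).
Proof.
  intros [B1 B2] Hm Hh H0. split.
  - destruct (Nat.eqb_spec m 0).
    + subst. specialize (H0 eq_refl). rewrite upd_at. split. lra. rewrite (Rabs_right (y 0%nat)) in Hh by (clear - B1; lra).
      pose proof (Rle_abs h). lra.
    + rewrite upd_other by lia. lra.
  - intros k Hk. destruct (Nat.eq_dec k m).
    + subst. rewrite upd_at. eapply Rle_lt_trans. apply Rabs_triang. lra.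
    + rewrite upd_other by auto. auto.
Qed.

Global Instance Box_region : region U Box Dir0.
Proof.
  split.
  - intros y m By Dm. exists (r - Rabs (y m)). split. pose proof (Box_coord y m By Dm). lra.
    intros h Hh Uh. apply Box_upd; auto. intros ->.
    destruct Uh as [Uh _]. rewrite upd_at in Uh. lra.
  - intros y m By Dm d Hd. pose proof (Box_coord y m By Dm).
    exists (Rmin d (r - Rabs (y m)) / 2).
    assert (0 < Rmin d (r - Rabs (y m))) by (apply Rmin_pos; lra).
    pose proof (Rmin_l d (r - Rabs (y m))). pose proof (Rmin_r d (r - Rabs (y m))).
    split. lra. split. rewrite Rabs_right; lra.
    apply Box_U. apply Box_upd; auto. rewrite Rabs_right; lra.
    destruct By. intros; lra.
Qed.

Lemma Slice_upd y m h : Slice y -> (1 <= m <= n)%nat -> Rabs h < r - Rabs (y m) -> Slice (upd y m (y m + h)).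
Proof.
  intros [B1 B2] Hm Hh. split.
  - rewrite upd_other by lia. auto.
  - intros k Hk. destruct (Nat.eq_dec k m).
    + subst. rewrite upd_at. eapply Rle_lt_trans. apply Rabs_triang. lra.
    + rewrite upd_other by auto. auto.
Qed.

Global Instance Slice_region : region U Slice Dir1.
Proof.
  split.
  - intros y m By Dm. exists (r - Rabs (y m)). split. destruct By as [_ B2]. pose proof (B2 m Dm). lra.
    intros h Hh Uh. apply Slice_upd; auto.
  - intros y m By Dm d Hd. assert (Rabs (y m) < r) by (apply By; auto).
    exists (Rmin d (r - Rabs (y m)) / 2).
    assert (0 < Rmin d (r - Rabs (y m))) by (apply Rmin_pos; lra).
    pose proof (Rmin_l d (r - Rabs (y m))). pose proof (Rmin_r d (r - Rabs (y m))).
    split. lra. split. rewrite Rabs_right; lra.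
    apply Box_U, Slice_Box. apply Slice_upd; auto. rewrite Rabs_right; lra.
Qed.

Lemma g_smooth i j : (1 <= i <= n)%nat -> (1 <= j <= n)%nat -> smooth_on n U (fun y => g y i j).
Proof. destruct Hflow as [H _]. auto. Qed.
Lemma g_sym y i j : U y -> (1 <= i <= n)%nat -> (1 <= j <= n)%nat -> g y i j = g y j i.
Proof. destruct Hflow as [_ [H _]]. auto. Qed.
Lemma g_inv1 y i k : U y -> (1 <= i <= n)%nat -> (1 <= k <= n)%nat ->
  sum1 n (fun j => g y i j * ginv y j k) = kdelta i k.
Proof. destruct Hflow as [_ [_ [_ [H _]]]]. intros. apply H; auto. Qed.
Lemma g_inv2 y i k : U y -> (1 <= i <= n)%nat -> (1 <= k <= n)%nat ->
  sum1 n (fun j => ginv y i j * g y j k) = kdelta i k.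
Proof. destruct Hflow as [_ [_ [_ [H _]]]]. intros. apply H; auto. Qed.
Lemma g_ricci y i j : U y -> (1 <= i <= n)%nat -> (1 <= j <= n)%nat ->
  has_pd U (fun z => g z i j) 0 y (-2 * Ric n U g ginv y i j).
Proof. destruct Hflow as [_ [_ [_ [_ H]]]]. intros. apply H; auto. Qed.

Section GSm.
Variables (B : (nat -> R) -> Prop) (Dir : nat -> Prop).
Context {RG : region U B Dir}.
Hypothesis BU : forall z, B z -> U z.
Hypothesis Dn : forall m, Dir m -> (m <= n)%nat.

Lemma iter_Sk i j k : (1 <= i <= n)%nat -> (1 <= j <= n)%nat -> forall s, (forall m, In m s -> (m <= n)%nat) ->
  Sk U B Dir k (iter_pd U s (fun y => g y i j)).
Proof.
  intros Hi Hj. induction k; intros s Hs.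
  - split; auto. intros y m By Dm. apply (proj2 (g_smooth i j Hi Hj s Hs)); auto.
  - split. intros y m By Dm. apply (proj2 (g_smooth i j Hi Hj s Hs)); auto.
    intros m Dm. apply (IHk (m :: s)). intros m' [<-|Hm']; auto.
Qed.

Lemma g_Sm i j : (1 <= i <= n)%nat -> (1 <= j <= n)%nat -> Sm U B Dir (fun y => g y i j).
Proof. intros Hi Hj k. apply (iter_Sk i j k Hi Hj nil). intros m []. Qed.
End GSm.

Lemma ginv_expand z i k : U z -> (1 <= i <= n)%nat -> (1 <= k <= n)%nat ->
  ginv z i k = kdelta i k - sum1 n (fun j => ginv z i j * (g z j k - kdelta j k)).
Proof.
  intros Uz Hi Hk.
  rewrite (sum1_ext n _ (fun j => ginv z i j * g z j k - kdelta j k * ginv z i j)) by (intros; ring).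
  rewrite sum1_minus, g_inv2, sum1_kdelta by auto. ring.
Qed.

Lemma INR_n_pos : 0 < INR n.
Proof. apply lt_0_INR. lia. Qed.

Lemma ginv_rowbound z i : Box z -> (1 <= i <= n)%nat -> sum1 n (fun k => Rabs (ginv z i k)) <= 2.
Proof.
  intros Bz Hi. pose proof (Box_U z Bz) as Uz.
  set (S := sum1 n (fun k => Rabs (ginv z i k))).
  set (e := / (4 * INR n)).
  pose proof INR_n_pos.
  assert (He : 0 < e) by (unfold e; apply Rinv_0_lt_compat; lra).
  assert (Hk : forall k, (1 <= k <= n)%nat -> Rabs (ginv z i k) <= Rabs (kdelta i k) + e * S).
  { intros k Hk. rewrite ginv_expand by auto.
    eapply Rle_trans. unfold Rminus. apply Rabs_triang. rewrite Rabs_Ropp.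
    apply Rplus_le_compat_l. eapply Rle_trans. apply sum1_abs.
    unfold S. rewrite <- sum1_scal. apply sum1_le. intros j Hj. rewrite Rabs_mult.
    rewrite Rmult_comm. apply Rmult_le_compat_r. apply Rabs_pos. apply Hrg; auto. }
  assert (S <= sum1 n (fun k => Rabs (kdelta i k) + e * S)) by (apply sum1_le; auto).
  rewrite sum1_plus, sum1_const in H0.
  rewrite (sum1_ext n _ (fun k => kdelta k i * 1)) in H0 by (intros; apply Rabs_kdelta).
  rewrite sum1_kdelta in H0 by auto.
  assert (INR n * (e * S) = S / 4) by (unfold e; field; lra).
  lra.
Qed.

Lemma ginv_bound z i k : Box z -> (1 <= i <= n)%nat -> (1 <= k <= n)%nat -> Rabs (ginv z i k) <= 2.
Proof.
  intros Bz Hi Hk. eapply Rle_trans; [|apply (ginv_rowbound z i Bz Hi)].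
  apply (sum1_ge_term n (fun k => Rabs (ginv z i k))); auto. intros; apply Rabs_pos.
Qed.

Lemma ginv_diff z w i k : U z -> U w -> (1 <= i <= n)%nat -> (1 <= k <= n)%nat ->
  ginv w i k - ginv z i k =
  - sum1 n (fun c => sum1 n (fun d => ginv w i c * (g w c d - g z c d) * ginv z d k)).
Proof.
  intros Uz Uw Hi Hk.
  rewrite (sum1_ext n _ (fun c => sum1 n (fun d => ginv w i c * g w c d * ginv z d k) -
                                   ginv w i c * sum1 n (fun d => g z c d * ginv z d k))).
  2:{ intros c Hc. rewrite <- sum1_scal, <- sum1_minus. apply sum1_ext. intros; ring. }
  rewrite sum1_minus, sum1_swap.
  rewrite (sum1_ext n (fun d => sum1 n _) (fun d => kdelta d i * ginv z d k)).
  2:{ intros d Hd. rewrite sum1_scalr. rewrite g_inv2 by auto. rewrite kdelta_sym. auto. }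
  rewrite sum1_kdelta by auto.
  rewrite (sum1_ext n (fun c => ginv w i c * _) (fun c => kdelta c k * ginv w i c)).
  2:{ intros c Hc. rewrite g_inv1 by auto. ring. }
  rewrite sum1_kdelta by auto. ring.
Qed.

Lemma Box_near z m : Box z -> (m <= n)%nat -> exists d0, 0 < d0 /\
  forall h, Rabs h < d0 -> U (upd z m (z m + h)) -> Box (upd z m (z m + h)).
Proof. intros Bz Hm. apply (@rg_loc U Box Dir0 Box_region); auto. Qed.

Lemma ginv_cont z m i k : Box z -> (m <= n)%nat -> (1 <= i <= n)%nat -> (1 <= k <= n)%nat ->
  (forall c d, (1 <= c <= n)%nat -> (1 <= d <= n)%nat -> exists l, has_pd U (fun y => g y c d) m z l) ->
  lim (dom U z m) (fun h => ginv (upd z m (z m + h)) i k) (ginv z i k).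
Proof.
  intros Bz Hm Hi Hk Hg.
  destruct (Box_near z m Bz Hm) as [d0 [Hd0 Hnear]].
  assert (Hl : lim (dom U z m) (fun h => ginv z i k - sum1 n (fun c => sum1 n (fun d =>
       ((g (upd z m (z m + h)) c d - g z c d) * ginv z d k) * ginv (upd z m (z m + h)) i c)))
       (ginv z i k - sum1 n (fun c => sum1 n (fun d => 0)))).
  { apply lim_minus. apply lim_const. apply lim_sum1. intros c Hc. apply lim_sum1. intros d Hd.
    apply lim_mult_zero.
    - replace 0 with (0 * ginv z d k) by ring. apply lim_mult; [|apply lim_const].
      replace 0 with (g z c d - g z c d) by ring. apply lim_minus; [|apply lim_const].
      destruct (Hg c d Hc Hd) as [l Hl]. apply (hp_cont _ _ _ _ _ Hl).
    - exists d0, 2. split; auto. intros h _ Hh Dh. apply ginv_bound; auto. }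
  rewrite (sum1_ext n (fun c => sum1 n (fun d => 0)) (fun _ => 0)) in Hl by (intros; apply sum1_zero).
  rewrite sum1_zero, Rminus_0_r in Hl.
  eapply lim_ext; [|exact Hl]. exists d0. split; auto. intros h _ Hh Dh.
  assert (ginv (upd z m (z m + h)) i k - ginv z i k = - sum1 n (fun c => sum1 n (fun d =>
       ((g (upd z m (z m + h)) c d - g z c d) * ginv z d k) * ginv (upd z m (z m + h)) i c))).
  { rewrite ginv_diff; auto. f_equal. apply sum1_ext; intros; apply sum1_ext; intros; ring.
    apply Box_U; auto. }
  lra.
Qed.

Lemma ginv_hp z m i k (L : nat -> nat -> R) : Box z -> (m <= n)%nat -> (1 <= i <= n)%nat -> (1 <= k <= n)%nat ->
  (forall c d, (1 <= c <= n)%nat -> (1 <= d <= n)%nat -> has_pd U (fun y => g y c d) m z (L c d)) ->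
  has_pd U (fun y => ginv y i k) m z (- sum1 n (fun c => sum1 n (fun d => ginv z i c * L c d * ginv z d k))).
Proof.
  intros Bz Hm Hi Hk Hg. apply hp_lim.
  assert (Hl : lim (dom U z m) (fun h => - sum1 n (fun c => sum1 n (fun d =>
      ginv (upd z m (z m + h)) i c * dq (fun y => g y c d) z m h * ginv z d k)))
      (- sum1 n (fun c => sum1 n (fun d => ginv z i c * L c d * ginv z d k)))).
  { apply lim_opp. apply lim_sum1. intros c Hc. apply lim_sum1. intros d Hd.
    apply lim_mult; [|apply lim_const]. apply lim_mult.
    apply ginv_cont; auto. intros; eexists; apply Hg; auto.
    apply hp_lim. apply Hg; auto. }
  eapply lim_ext; [|exact Hl]. exists 1. split. lra. intros h Hh _ Dh.
  unfold dq. rewrite ginv_diff; auto. 2: apply Box_U; auto.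
  unfold Rdiv. rewrite Ropp_mult_distr_l_reverse. f_equal.
  rewrite <- sum1_scalr. apply sum1_ext; intros c Hc.
  rewrite <- sum1_scalr. apply sum1_ext; intros d Hd. unfold dq. unfold Rdiv. ring.
Qed.

Lemma Sk_opp (B : (nat -> R) -> Prop) Dir {RG : region U B Dir} k F : Sk U B Dir k F -> Sk U B Dir k (fun z => - F z).
Proof. intros H. apply (Sk_ext U B Dir k (fun z => -1 * F z)); [intros y _; ring| exact (Sk_scal U B Dir k (-1) F H)]. Qed.
Lemma Sm_opp (B : (nat -> R) -> Prop) Dir {RG : region U B Dir} F : Sm U B Dir F -> Sm U B Dir (fun z => - F z).
Proof. intros H k. apply Sk_opp; auto. Qed.

Section GinvSm.
Variables (B : (nat -> R) -> Prop) (Dir : nat -> Prop).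
Context {RG : region U B Dir}.
#[local] Existing Instance RG.
Hypothesis BBox : forall z, B z -> Box z.
Hypothesis Dn : forall m, Dir m -> (m <= n)%nat.

Lemma BU z : B z -> U z.
Proof. intros; apply Box_U; auto. Qed.

Lemma ginv_hpB y m i k : B y -> Dir m -> (1 <= i <= n)%nat -> (1 <= k <= n)%nat ->
  has_pd U (fun z => ginv z i k) m y
    (- sum1 n (fun c => sum1 n (fun d => ginv y i c * pd U m (fun z => g z c d) y * ginv y d k))).
Proof.
  intros By Dm Hi Hk. apply ginv_hp; auto. intros c d Hc Hd.
  apply (Sm_hp U B Dir); auto. apply g_Sm; auto. apply BU.
Qed.

Lemma pd_ginvB m i k : Dir m -> (1 <= i <= n)%nat -> (1 <= k <= n)%nat ->
  eqB B (pd U m (fun z => ginv z i k))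
    (fun y => - sum1 n (fun c => sum1 n (fun d => ginv y i c * pd U m (fun z => g z c d) y * ginv y d k))).
Proof. intros Dm Hi Hk y By. apply (pd_specB U B Dir); auto. apply ginv_hpB; auto. Qed.

Lemma ginv_Sk k : forall i j, (1 <= i <= n)%nat -> (1 <= j <= n)%nat -> Sk U B Dir k (fun z => ginv z i j).
Proof.
  induction k; intros i j Hi Hj.
  - split; auto. intros y m By Dm. eexists. apply ginv_hpB; auto.
  - split. intros y m By Dm. eexists. apply ginv_hpB; auto.
    intros m Dm. apply (Sk_ext U B Dir k _ _ (fun y By => eq_sym (pd_ginvB m i j Dm Hi Hj y By))).
    cbv beta.
    apply (Sk_opp B Dir (RG := RG)). ap Sk_sum1. intros c Hc. ap Sk_sum1. intros d Hd.
    ap Sk_mult. ap Sk_mult. apply IHk; auto.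
    apply (Sm_pd U B Dir). apply g_Sm; auto. apply BU. auto. apply IHk; auto.
Qed.

Lemma ginv_Sm i j : (1 <= i <= n)%nat -> (1 <= j <= n)%nat -> Sm U B Dir (fun z => ginv z i j).
Proof. intros Hi Hj k. apply ginv_Sk; auto. Qed.
End GinvSm.

Definition F1 k (y : nat -> R) := sum1 n (fun q => a k q * (y q * y q)) + 2 * y k * sum1 n (fun r0 => a r0 k * y r0).
Definition F2 k c (y : nat -> R) := 2 * a k c * y c + 2 * a c k * y k + 2 * kdelta k c * sum1 n (fun r0 => a r0 k * y r0).
Definition Tc k c d := 2 * a k c * kdelta c d + 2 * a c k * kdelta k d + 2 * kdelta k c * a d k.

Lemma fcubic_eq : fcubic n a = fun y => sum1 n (fun r0 => sum1 n (fun q => a r0 q * y r0 * (y q * y q))).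
Proof. apply functional_extensionality. intro y. unfold fcubic. apply sum1_ext; intros; apply sum1_ext; intros; ring. Qed.

Lemma hp_fcubic (D : (nat -> R) -> Prop) k y : (1 <= k <= n)%nat -> has_pd D (fcubic n a) k y (F1 k y).
Proof.
  intros Hk. rewrite fcubic_eq. eapply hp_eq.
  - apply hp_sum1. intros r0 Hr0. apply hp_sum1. intros q Hq.
    apply hp_mult. apply hp_scal. apply hp_coord. apply hp_mult; apply hp_coord.
  - unfold F1.
    rewrite (sum1_ext n _ (fun r0 => kdelta r0 k * sum1 n (fun q => a r0 q * (y q * y q)) +
                                     a r0 k * y r0 * (2 * y k))).
    + rewrite sum1_plus, sum1_kdelta by auto. f_equal.
      rewrite (sum1_ext n _ (fun r0 => 2 * y k * (a r0 k * y r0))) by (intros; ring).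
      rewrite sum1_scal. auto.
    + intros r0 Hr0. rewrite sum1_plus. f_equal.
      * rewrite <- sum1_scal. apply sum1_ext; intros; ring.
      * rewrite (sum1_ext n _ (fun q => kdelta q k * (2 * a r0 q * y r0 * y q))) by (intros; ring).
        rewrite sum1_kdelta by auto. ring.
Qed.

Lemma approachable_True y m : approachable (fun _ => True) y m.
Proof. intros d Hd. exists (d/2). split. lra. split. rewrite Rabs_right; lra. exact I. Qed.

Lemma pd_fcubic k : (1 <= k <= n)%nat -> pd (fun _ => True) k (fcubic n a) = F1 k.
Proof.
  intros Hk. apply functional_extensionality. intro y. apply pd_spec. apply approachable_True.
  apply hp_fcubic; auto.
Qed.

Lemma graph_metric_eq y i j : (1 <= i <= n)%nat -> (1 <= j <= n)%nat ->
  graph_metric n a y i j = kdelta i j + F1 i y * F1 j y.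
Proof. intros. unfold graph_metric. rewrite !pd_fcubic; auto. Qed.

Lemma g_slice y i j : Slice y -> (1 <= i <= n)%nat -> (1 <= j <= n)%nat ->
  g y i j = kdelta i j + F1 i y * F1 j y.
Proof.
  intros Sy Hi Hj. rewrite Hinit; auto. apply graph_metric_eq; auto.
  apply Box_U, Slice_Box; auto. apply Sy.
Qed.

Lemma hp_F1 D k c y : (1 <= k <= n)%nat -> (1 <= c <= n)%nat -> has_pd D (F1 k) c y (F2 k c y).
Proof.
  intros Hk Hc. unfold F1. eapply hp_eq.
  - apply hp_plus. apply hp_sum1. intros q Hq. apply hp_scal. apply hp_mult; apply hp_coord.
    apply hp_mult. apply hp_scal. apply hp_coord. apply hp_sum1. intros r0 Hr0. apply hp_scal. apply hp_coord.
  - unfold F2.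
    rewrite (sum1_ext n (fun q => a k q * _) (fun q => kdelta q c * (2 * a k q * y q))) by (intros; ring).
    rewrite sum1_kdelta by auto.
    rewrite (sum1_ext n (fun r0 => a r0 k * kdelta r0 c) (fun r0 => kdelta r0 c * a r0 k)) by (intros; ring).
    rewrite sum1_kdelta by auto. ring.
Qed.

Lemma hp_F2 D k c d y : (1 <= k <= n)%nat -> (1 <= c <= n)%nat -> (1 <= d <= n)%nat ->
  has_pd D (F2 k c) d y (Tc k c d).
Proof.
  intros Hk Hc Hd. unfold F2. eapply hp_eq.
  - apply hp_plus. apply hp_plus. apply hp_scal. apply hp_coord. apply hp_scal. apply hp_coord.
    apply hp_scal. apply hp_sum1. intros r0 Hr0. apply hp_scal. apply hp_coord.
  - unfold Tc.
    rewrite (sum1_ext n (fun r0 => a r0 k * kdelta r0 d) (fun r0 => kdelta r0 d * a r0 k)) by (intros; ring).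
    rewrite sum1_kdelta by auto. ring.
Qed.

Lemma Dir1_n m : Dir1 m -> (m <= n)%nat.
Proof. unfold Dir1. lia. Qed.
Lemma Dir0_n m : Dir0 m -> (m <= n)%nat.
Proof. auto. Qed.
Lemma Slice_U z : Slice z -> U z.
Proof. intros; apply Box_U, Slice_Box; auto. Qed.

Lemma gS i j : (1 <= i <= n)%nat -> (1 <= j <= n)%nat -> Sm U Slice Dir1 (fun y => g y i j).
Proof. intros. apply (g_Sm Slice Dir1 Slice_U Dir1_n); auto. Qed.
Lemma gB i j : (1 <= i <= n)%nat -> (1 <= j <= n)%nat -> Sm U Box Dir0 (fun y => g y i j).
Proof. intros. apply (g_Sm Box Dir0 Box_U Dir0_n); auto. Qed.
Lemma ginvS i j : (1 <= i <= n)%nat -> (1 <= j <= n)%nat -> Sm U Slice Dir1 (fun y => ginv y i j).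
Proof. intros. apply (ginv_Sm Slice Dir1 Slice_Box Dir1_n); auto. Qed.
Lemma ginvB i j : (1 <= i <= n)%nat -> (1 <= j <= n)%nat -> Sm U Box Dir0 (fun y => ginv y i j).
Proof. intros. apply (ginv_Sm Box Dir0 (fun z H => H) Dir0_n); auto. Qed.

Lemma pd_F1S k c : (1 <= k <= n)%nat -> Dir1 c -> eqB Slice (pd U c (F1 k)) (F2 k c).
Proof. intros Hk Hc y Sy. apply (pd_specB U Slice Dir1); auto. apply hp_F1; auto. Qed.
Lemma pd_F2S k c d : (1 <= k <= n)%nat -> (1 <= c <= n)%nat -> Dir1 d -> eqB Slice (pd U d (F2 k c)) (fun _ => Tc k c d).
Proof. intros Hk Hc Hd y Sy. apply (pd_specB U Slice Dir1); auto. apply hp_F2; auto. Qed.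

Lemma Sm_F2 k c : (1 <= k <= n)%nat -> (1 <= c <= n)%nat -> Sm U Slice Dir1 (F2 k c).
Proof.
  intros Hk Hc. ap Sm_from_pd. intros y m Sy Dm. eexists. apply hp_F2; auto.
  intros m Dm. exists (fun _ => Tc k c m). split. apply pd_F2S; auto. ap Sm_const.
Qed.
Lemma Sm_F1 k : (1 <= k <= n)%nat -> Sm U Slice Dir1 (F1 k).
Proof.
  intros Hk. ap Sm_from_pd. intros y m Sy Dm. eexists. apply hp_F1; auto.
  intros m Dm. exists (F2 k m). split. apply pd_F1S; auto. apply Sm_F2; auto.
Qed.

Lemma F1_0 k : F1 k origin = 0.
Proof. unfold F1, origin. rewrite (sum1_ext n _ (fun _ => 0)) by (intros; ring). rewrite sum1_zero. ring. Qed.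
Lemma F2_0 k c : F2 k c origin = 0.
Proof. unfold F2, origin. rewrite (sum1_ext n _ (fun _ => 0)) by (intros; ring). rewrite sum1_zero. ring. Qed.

Lemma Z_F2 k c : Zk U Dir1 origin 1 (F2 k c).
Proof. split. apply F2_0. intros; exact I. Qed.
Lemma Z_F1 k : (1 <= k <= n)%nat -> Zk U Dir1 origin 2 (F1 k).
Proof.
  intros Hk. split. apply F1_0. intros m Dm.
  apply (Z_ext U Slice Dir1 origin origin_Slice 1 (F2 k m)). intros y Sy. symmetry. apply pd_F1S; auto.
  apply Z_F2.
Qed.

Definition Hfun i j := fun z => g z i j - kdelta i j.

Lemma Hfun_S i j : (1 <= i <= n)%nat -> (1 <= j <= n)%nat -> eqB Slice (Hfun i j) (fun z => F1 i z * F1 j z).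
Proof. intros Hi Hj y Sy. unfold Hfun. rewrite g_slice; auto. ring. Qed.
Lemma Sm_H i j : (1 <= i <= n)%nat -> (1 <= j <= n)%nat -> Sm U Slice Dir1 (Hfun i j).
Proof. intros. ap Sm_minus. apply gS; auto. ap Sm_const. Qed.
Lemma Z_H i j : (1 <= i <= n)%nat -> (1 <= j <= n)%nat -> Zk U Dir1 origin 4 (Hfun i j).
Proof.
  intros Hi Hj. apply (Z_ext U Slice Dir1 origin origin_Slice 4 (fun z => F1 i z * F1 j z)).
  intros y Sy. symmetry. apply Hfun_S; auto.
  apply (Z_mult U Slice Dir1 origin origin_Slice 4 2 2); auto; try apply Sm_F1; auto; apply Z_F1; auto.
Qed.

Lemma pd_g_H m i j : Dir1 m -> (1 <= i <= n)%nat -> (1 <= j <= n)%nat ->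
  eqB Slice (pd U m (fun y => g y i j)) (pd U m (Hfun i j)).
Proof.
  intros Dm Hi Hj y Sy. unfold Hfun.
  rewrite (pd_minusB U Slice Dir1 (fun y => g y i j) (fun _ => kdelta i j) m); auto.
  rewrite (pd_constB U Slice Dir1 (kdelta i j) m); auto. ring. apply Sm_0, gS; auto. apply Sm_0. ap Sm_const.
Qed.

Lemma Z_dg m i j : Dir1 m -> (1 <= i <= n)%nat -> (1 <= j <= n)%nat ->
  Zk U Dir1 origin 3 (pd U m (fun y => g y i j)).
Proof.
  intros Dm Hi Hj. apply (Z_ext U Slice Dir1 origin origin_Slice 3 (pd U m (Hfun i j))).
  intros y Sy. symmetry. apply pd_g_H; auto. apply Z_pd; auto. apply Z_H; auto.
Qed.

Definition Dfun j k l := fun z => pd U j (fun y => g y k l) z + pd U k (fun y => g y j l) z - pd U l (fun y => g y j k) z.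

Lemma Sm_D B Dir {RG : region U B Dir} j k l : (forall i j, (1 <= i <= n)%nat -> (1 <= j <= n)%nat -> Sm U B Dir (fun y => g y i j)) ->
  Dir j -> Dir k -> Dir l -> (1 <= j <= n)%nat -> (1 <= k <= n)%nat -> (1 <= l <= n)%nat -> Sm U B Dir (Dfun j k l).
Proof.
  intros Hg Dj Dk Dl Hj Hk Hl. unfold Dfun. ap Sm_minus. ap Sm_plus. all: apply Sm_pd; auto.
Qed.
Lemma DS j k l : (1 <= j <= n)%nat -> (1 <= k <= n)%nat -> (1 <= l <= n)%nat -> Sm U Slice Dir1 (Dfun j k l).
Proof. intros. ap Sm_D; auto. apply gS. Qed.
Lemma DB j k l : (1 <= j <= n)%nat -> (1 <= k <= n)%nat -> (1 <= l <= n)%nat -> Sm U Box Dir0 (Dfun j k l).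
Proof. intros. ap Sm_D; auto; unfold Dir0; try lia. apply gB. Qed.

Lemma Z_D j k l : (1 <= j <= n)%nat -> (1 <= k <= n)%nat -> (1 <= l <= n)%nat -> Zk U Dir1 origin 3 (Dfun j k l).
Proof.
  intros Hj Hk Hl. unfold Dfun.
  apply (Z_minus U Slice Dir1 origin origin_Slice). ap Sm_plus; apply Sm_pd; auto; apply gS; auto.
  apply Sm_pd; auto; apply gS; auto.
  apply (Z_plus U Slice Dir1 origin origin_Slice); try (apply Sm_pd; auto; apply gS; auto); apply Z_dg; auto.
  apply Z_dg; auto.
Qed.

Definition Gam j k m := fun z => Gamma n U g ginv z j k m.

Lemma Sm_Gam B Dir {RG : region U B Dir} j k m :
  (forall i j, (1 <= i <= n)%nat -> (1 <= j <= n)%nat -> Sm U B Dir (fun y => g y i j)) ->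
  (forall i j, (1 <= i <= n)%nat -> (1 <= j <= n)%nat -> Sm U B Dir (fun y => ginv y i j)) ->
  (forall i, (1 <= i <= n)%nat -> Dir i) ->
  (1 <= j <= n)%nat -> (1 <= k <= n)%nat -> (1 <= m <= n)%nat -> Sm U B Dir (Gam j k m).
Proof.
  intros Hg Hgi HD Hj Hk Hm. unfold Gam, Gamma. ap Sm_scal. ap Sm_sum1. intros l Hl.
  ap Sm_mult. apply Hgi; auto. ap (Sm_D B Dir); auto.
Qed.

Lemma GamS j k m : (1 <= j <= n)%nat -> (1 <= k <= n)%nat -> (1 <= m <= n)%nat -> Sm U Slice Dir1 (Gam j k m).
Proof. intros. ap Sm_Gam; auto. apply gS. apply ginvS. Qed.
Lemma GamB j k m : (1 <= j <= n)%nat -> (1 <= k <= n)%nat -> (1 <= m <= n)%nat -> Sm U Box Dir0 (Gam j k m).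
Proof. intros. ap Sm_Gam; auto. apply gB. apply ginvB. intros; unfold Dir0; lia. Qed.

Lemma Z_Gam j k m : (1 <= j <= n)%nat -> (1 <= k <= n)%nat -> (1 <= m <= n)%nat -> Zk U Dir1 origin 3 (Gam j k m).
Proof.
  intros Hj Hk Hm. unfold Gam, Gamma.
  apply (Z_scal U Slice Dir1 origin origin_Slice). ap Sm_sum1. intros; ap Sm_mult. apply ginvS; auto. apply DS; auto.
  apply (Z_sum1 U Slice Dir1 origin origin_Slice). intros; ap Sm_mult. apply ginvS; auto. apply DS; auto.
  intros l Hl. apply (Z_mult U Slice Dir1 origin origin_Slice 3 0 3); auto. apply ginvS; auto. apply DS; auto.
  simpl; auto. apply Z_D; auto.
Qed.

Definition Efun j k m := fun z => /2 * sum1 n (fun l => (ginv z m l - kdelta m l) * Dfun j k l z).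

Lemma Gam_split j k m : (1 <= m <= n)%nat ->
  (fun z => Gamma n U g ginv z j k m) = (fun z => /2 * Dfun j k m z + Efun j k m z).
Proof.
  intros Hm. apply functional_extensionality. intro z. unfold Gamma, Efun.
  rewrite <- Rmult_plus_distr_l. f_equal.
  rewrite (sum1_ext n (fun l => ginv z m l * _) (fun l => (ginv z m l - kdelta m l) * Dfun j k l z + kdelta m l * Dfun j k l z)).
  rewrite sum1_plus, sum1_kdelta' by auto. ring.
  intros l Hl. unfold Dfun. ring.
Qed.

Lemma ginvmd_S m l : (1 <= m <= n)%nat -> (1 <= l <= n)%nat ->
  eqB Slice (fun z => ginv z m l - kdelta m l) (fun z => - sum1 n (fun q => ginv z m q * Hfun q l z)).
Proof. intros Hm Hl z Sz. rewrite ginv_expand; auto. unfold Hfun. ring. apply Slice_U; auto. Qed.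

Lemma Z_ginvmd m l : (1 <= m <= n)%nat -> (1 <= l <= n)%nat -> Zk U Dir1 origin 4 (fun z => ginv z m l - kdelta m l).
Proof.
  intros Hm Hl. apply (Z_ext U Slice Dir1 origin origin_Slice 4 (fun z => - sum1 n (fun q => ginv z m q * Hfun q l z))).
  intros z Sz. symmetry. apply ginvmd_S; auto.
  apply (Z_ext U Slice Dir1 origin origin_Slice 4 (fun z => -1 * sum1 n (fun q => ginv z m q * Hfun q l z))).
  intros z _. ring.
  apply (Z_scal U Slice Dir1 origin origin_Slice). ap Sm_sum1. intros; ap Sm_mult. apply ginvS; auto. apply Sm_H; auto.
  apply (Z_sum1 U Slice Dir1 origin origin_Slice). intros; ap Sm_mult. apply ginvS; auto. apply Sm_H; auto.
  intros q Hq. apply (Z_mult U Slice Dir1 origin origin_Slice 4 0 4); auto. apply ginvS; auto. apply Sm_H; auto.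
  simpl; auto. apply Z_H; auto.
Qed.

Lemma Sm_E B Dir {RG : region U B Dir} j k m :
  (forall i j, (1 <= i <= n)%nat -> (1 <= j <= n)%nat -> Sm U B Dir (fun y => g y i j)) ->
  (forall i j, (1 <= i <= n)%nat -> (1 <= j <= n)%nat -> Sm U B Dir (fun y => ginv y i j)) ->
  (forall i, (1 <= i <= n)%nat -> Dir i) ->
  (1 <= j <= n)%nat -> (1 <= k <= n)%nat -> (1 <= m <= n)%nat -> Sm U B Dir (Efun j k m).
Proof.
  intros Hg Hgi HD Hj Hk Hm. unfold Efun. ap Sm_scal. ap Sm_sum1. intros l Hl.
  ap Sm_mult. ap Sm_minus. apply Hgi; auto. ap Sm_const. ap (Sm_D B Dir); auto.
Qed.
Lemma ES j k m : (1 <= j <= n)%nat -> (1 <= k <= n)%nat -> (1 <= m <= n)%nat -> Sm U Slice Dir1 (Efun j k m).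
Proof. intros. ap Sm_E; auto. apply gS. apply ginvS. Qed.

Lemma Z_E j k m : (1 <= j <= n)%nat -> (1 <= k <= n)%nat -> (1 <= m <= n)%nat -> Zk U Dir1 origin 7 (Efun j k m).
Proof.
  intros Hj Hk Hm. unfold Efun.
  assert (S1 : forall l, (1 <= l <= n)%nat -> Sm U Slice Dir1 (fun z => (ginv z m l - kdelta m l) * Dfun j k l z)).
  { intros l Hl. ap Sm_mult. ap Sm_minus. apply ginvS; auto. ap Sm_const. apply DS; auto. }
  apply (Z_scal U Slice Dir1 origin origin_Slice). ap Sm_sum1. exact S1.
  apply (Z_sum1 U Slice Dir1 origin origin_Slice). exact S1.
  intros l Hl. apply (Z_mult U Slice Dir1 origin origin_Slice 7 4 3); auto.
  ap Sm_minus. apply ginvS; auto. ap Sm_const. apply DS; auto. apply Z_ginvmd; auto. apply Z_D; auto.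
Qed.

Lemma Sm_Rup B Dir {RG : region U B Dir} i j k m :
  (forall i j, (1 <= i <= n)%nat -> (1 <= j <= n)%nat -> Sm U B Dir (fun y => g y i j)) ->
  (forall i j, (1 <= i <= n)%nat -> (1 <= j <= n)%nat -> Sm U B Dir (fun y => ginv y i j)) ->
  (forall i, (1 <= i <= n)%nat -> Dir i) ->
  (1 <= i <= n)%nat -> (1 <= j <= n)%nat -> (1 <= k <= n)%nat -> (1 <= m <= n)%nat ->
  Sm U B Dir (fun z => Rup n U g ginv z i j k m).
Proof.
  intros Hg Hgi HD Hi Hj Hk Hm. unfold Rup. ap Sm_plus. ap Sm_minus.
  apply Sm_pd; auto. apply (Sm_Gam B Dir); auto.
  apply Sm_pd; auto. apply (Sm_Gam B Dir); auto.
  ap Sm_sum1. intros p Hp. ap Sm_minus; ap Sm_mult; apply (Sm_Gam B Dir); auto.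
Qed.

Lemma Sm_Ric B Dir {RG : region U B Dir} j k :
  (forall i j, (1 <= i <= n)%nat -> (1 <= j <= n)%nat -> Sm U B Dir (fun y => g y i j)) ->
  (forall i j, (1 <= i <= n)%nat -> (1 <= j <= n)%nat -> Sm U B Dir (fun y => ginv y i j)) ->
  (forall i, (1 <= i <= n)%nat -> Dir i) ->
  (1 <= j <= n)%nat -> (1 <= k <= n)%nat -> Sm U B Dir (fun z => Ric n U g ginv z j k).
Proof.
  intros Hg Hgi HD Hj Hk. unfold Ric. ap Sm_sum1. intros i Hi. apply (Sm_Rup B Dir); auto.
Qed.

Definition RemR i j k m := fun z => Rup n U g ginv z i j k m - /2 * (pd U i (Dfun j k m) z - pd U j (Dfun i k m) z).

Lemma RemR_S i j k m : (1 <= i <= n)%nat -> (1 <= j <= n)%nat -> (1 <= k <= n)%nat -> (1 <= m <= n)%nat ->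
  eqB Slice (RemR i j k m) (fun z => pd U i (Efun j k m) z - pd U j (Efun i k m) z +
     sum1 n (fun p => Gam j k p z * Gam i p m z - Gam i k p z * Gam j p m z)).
Proof.
  intros Hi Hj Hk Hm z Sz. unfold RemR, Rup. rewrite (Gam_split j k m), (Gam_split i k m) by auto.
  rewrite (pd_plusB U Slice Dir1 (fun z => /2 * Dfun j k m z) (Efun j k m) i); auto.
  rewrite (pd_plusB U Slice Dir1 (fun z => /2 * Dfun i k m z) (Efun i k m) j); auto.
  rewrite (pd_scalB U Slice Dir1 (/2) (Dfun j k m) i); auto.
  rewrite (pd_scalB U Slice Dir1 (/2) (Dfun i k m) j); auto.
  unfold Gam. ring.
  all: apply Sm_0; first [apply DS; auto | apply ES; auto | ap Sm_scal; apply DS; auto].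
Qed.

Lemma Z_RemR i j k m : (1 <= i <= n)%nat -> (1 <= j <= n)%nat -> (1 <= k <= n)%nat -> (1 <= m <= n)%nat ->
  Zk U Dir1 origin 6 (RemR i j k m).
Proof.
  intros Hi Hj Hk Hm. eapply (Z_ext U Slice Dir1 origin origin_Slice 6).
  intros z Sz. symmetry. apply RemR_S; auto.
  assert (SE1 : Sm U Slice Dir1 (pd U i (Efun j k m))) by (apply Sm_pd; auto; apply ES; auto).
  assert (SE2 : Sm U Slice Dir1 (pd U j (Efun i k m))) by (apply Sm_pd; auto; apply ES; auto).
  assert (SG : forall p, (1 <= p <= n)%nat -> Sm U Slice Dir1 (fun z => Gam j k p z * Gam i p m z - Gam i k p z * Gam j p m z)).
  { intros p Hp. ap Sm_minus; ap Sm_mult; apply GamS; auto. }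
  apply (Z_plus U Slice Dir1 origin origin_Slice).
  - ap Sm_minus; [exact SE1|exact SE2].
  - ap Sm_sum1. exact SG.
  - apply (Z_minus U Slice Dir1 origin origin_Slice); auto.
    apply Z_pd; auto. apply Z_E; auto.
    apply Z_pd; auto. apply Z_E; auto.
  - apply (Z_sum1 U Slice Dir1 origin origin_Slice); auto. intros p Hp.
    apply (Z_minus U Slice Dir1 origin origin_Slice); try (ap Sm_mult; apply GamS; auto).
    apply (Z_mult U Slice Dir1 origin origin_Slice 6 3 3); auto; try apply GamS; auto; apply Z_Gam; auto.
    apply (Z_mult U Slice Dir1 origin origin_Slice 6 3 3); auto; try apply GamS; auto; apply Z_Gam; auto.
Qed.

Definition Main j k := fun z => sum1 n (fun i => /2 * (pd U i (Dfun j k i) z - pd U j (Dfun i k i) z)).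

Lemma Ric_split j k : (fun z => Ric n U g ginv z j k) = (fun z => Main j k z + sum1 n (fun i => RemR i j k i z)).
Proof.
  apply functional_extensionality. intro z. unfold Ric, Main, RemR. rewrite <- sum1_plus.
  apply sum1_ext. intros; ring.
Qed.

Lemma Sm_Main j k : (1 <= j <= n)%nat -> (1 <= k <= n)%nat -> Sm U Slice Dir1 (Main j k).
Proof.
  intros Hj Hk. unfold Main. ap Sm_sum1. intros i Hi. ap Sm_scal. ap Sm_minus; apply Sm_pd; auto; apply DS; auto.
Qed.

Lemma Sm_RemR i j k m : (1 <= i <= n)%nat -> (1 <= j <= n)%nat -> (1 <= k <= n)%nat -> (1 <= m <= n)%nat ->
  Sm U Slice Dir1 (RemR i j k m).
Proof.
  intros. unfold RemR. ap Sm_minus. apply (Sm_Rup Slice Dir1); auto. apply gS. apply ginvS.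
  ap Sm_scal. ap Sm_minus; apply Sm_pd; auto; apply DS; auto.
Qed.

Lemma RR_main a0 b0 j k : (1 <= a0 <= n)%nat -> (1 <= b0 <= n)%nat -> (1 <= j <= n)%nat -> (1 <= k <= n)%nat ->
  pd U a0 (pd U b0 (fun z => Ric n U g ginv z j k)) origin = pd U a0 (pd U b0 (Main j k)) origin.
Proof.
  intros Ha Hb Hj Hk. rewrite Ric_split.
  rewrite (pd2_plus_at U Slice Dir1 origin origin_Slice); auto.
  rewrite (Z2_pd2 U Dir1 origin (fun z => sum1 n (fun i => RemR i j k i z))); auto. ring.
  apply (Z_sum1 U Slice Dir1 origin origin_Slice). intros; apply Sm_RemR; auto.
  intros i Hi. apply (Z_mono_le U Dir1 origin 3 6); auto. apply Z_RemR; auto.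
  apply Sm_Main; auto. ap Sm_sum1. intros; apply Sm_RemR; auto.
Qed.

Lemma v_C_1 c a0 : Dir1 a0 -> pd U a0 (fun _ => c) origin = 0.
Proof. intros. apply (pd_constB U Slice Dir1); auto. apply origin_Slice. Qed.
Lemma v_F1_1 l a0 : (1 <= l <= n)%nat -> Dir1 a0 -> pd U a0 (F1 l) origin = 0.
Proof. intros. rewrite (pd_F1S l a0); auto. apply F2_0. apply origin_Slice. Qed.
Lemma v_F2_1 k c a0 : (1 <= k <= n)%nat -> (1 <= c <= n)%nat -> Dir1 a0 -> pd U a0 (F2 k c) origin = Tc k c a0.
Proof. intros. rewrite (pd_F2S k c a0); auto. apply origin_Slice. Qed.
Lemma v_F2_2 k c a0 b0 : (1 <= k <= n)%nat -> (1 <= c <= n)%nat -> Dir1 a0 -> Dir1 b0 ->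
  pd U a0 (pd U b0 (F2 k c)) origin = 0.
Proof.
  intros Hk Hc Ha0 Hb0.
  rewrite (pd_extB U Slice Dir1 (pd U b0 (F2 k c)) (fun _ => Tc k c b0) a0 Ha0 (pd_F2S k c b0 Hk Hc Hb0) origin origin_Slice).
  apply v_C_1; auto.
Qed.
Lemma v_F1_2 l a0 b0 : (1 <= l <= n)%nat -> Dir1 a0 -> Dir1 b0 -> pd U a0 (pd U b0 (F1 l)) origin = Tc l b0 a0.
Proof.
  intros Hl Ha0 Hb0.
  rewrite (pd_extB U Slice Dir1 (pd U b0 (F1 l)) (F2 l b0) a0 Ha0 (pd_F1S l b0 Hl Hb0) origin origin_Slice).
  apply v_F2_1; auto.
Qed.

Definition Q4 a0 b0 c d k l := pd U a0 (pd U b0 (pd U c (pd U d (fun y0 => g y0 k l)))) origin.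
Definition Qv a0 b0 c d k l :=
  Tc k d c * Tc l b0 a0 + Tc k d b0 * Tc l c a0 + Tc k d a0 * Tc l c b0 +
  Tc k c b0 * Tc l d a0 + Tc k c a0 * Tc l d b0 + Tc k b0 a0 * Tc l d c.

Lemma Q4_val a0 b0 c d k l : Dir1 a0 -> Dir1 b0 -> Dir1 c -> Dir1 d -> (1 <= k <= n)%nat -> (1 <= l <= n)%nat ->
  Q4 a0 b0 c d k l = Qv a0 b0 c d k l.
Proof.
  intros Ha Hb Hc Hd Hk Hl. unfold Q4.
  assert (E1 : eqB Slice (pd U d (fun y0 => g y0 k l)) (fun z => F2 k d z * F1 l z + F1 k z * F2 l d z)).
  { intros y Sy. rewrite pd_g_H; auto.
    rewrite (pd_extB U Slice Dir1 (Hfun k l) (fun z => F1 k z * F1 l z) d); auto.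
    rewrite (pd_multB U Slice Dir1); auto. rewrite !pd_F1S; auto.
    apply Sm_0, Sm_F1; auto. apply Sm_0, Sm_F1; auto. apply Hfun_S; auto. }
  assert (SP : forall k c, (1 <= k <= n)%nat -> (1 <= c <= n)%nat -> Sm U Slice Dir1 (F2 k c)) by (intros; apply Sm_F2; auto).
  assert (SQ : forall k, (1 <= k <= n)%nat -> Sm U Slice Dir1 (F1 k)) by (intros; apply Sm_F1; auto).
  assert (E2 : eqB Slice (pd U c (pd U d (fun y0 => g y0 k l)))
     (fun z => ((fun _ => Tc k d c) z * F1 l z + F2 k d z * F2 l c z) + (F2 k c z * F2 l d z + F1 k z * (fun _ => Tc l d c) z))).
  { intros y Sy. rewrite (pd_extB U Slice Dir1 _ _ c Hc E1 y Sy).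
    rewrite (pd_plusB U Slice Dir1); auto. rewrite !(pd_multB U Slice Dir1); auto.
    rewrite !pd_F1S, !pd_F2S; auto.
    all: try (apply Sm_0; ap Sm_mult; auto).
    all: apply Sm_0; auto. }
  rewrite (pd2_at_ext U Slice Dir1 origin origin_Slice _ _ a0 b0 Ha Hb E2).
  assert (SC : forall c0, Sm U Slice Dir1 (fun _ : nat -> R => c0)) by (intros; ap Sm_const).
  rewrite (pd2_plus_at U Slice Dir1 origin origin_Slice); auto.
  2,3: ap Sm_plus; ap Sm_mult; auto.
  rewrite !(pd2_plus_at U Slice Dir1 origin origin_Slice); auto.
  2-5: ap Sm_mult; auto.
  rewrite !(pd2_mult_at U Slice Dir1 origin origin_Slice); auto.
  rewrite !(pd2_at_const U Slice Dir1 origin origin_Slice), !v_C_1; auto.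
  rewrite !v_F1_1, !v_F1_2, !v_F2_1, !v_F2_2, !F1_0, !F2_0; auto.
  unfold Qv. ring.
Qed.

Lemma pd3_D a0 b0 i j k l : Dir1 a0 -> Dir1 b0 -> Dir1 i -> Dir1 j -> Dir1 k -> Dir1 l ->
  pd U a0 (pd U b0 (pd U i (Dfun j k l))) origin = Q4 a0 b0 i j k l + Q4 a0 b0 i k j l - Q4 a0 b0 i l j k.
Proof.
  intros Ha Hb Hi Hj Hk Hl.
  assert (SG : forall x y p q, Dir1 x -> Dir1 y -> Dir1 p -> Dir1 q -> Sm U Slice Dir1 (pd U x (pd U y (fun y0 => g y0 p q)))).
  { intros. apply Sm_pd; auto. apply Sm_pd; auto. apply gS; auto. }
  assert (E : eqB Slice (pd U i (Dfun j k l)) (fun z => pd U i (pd U j (fun y0 => g y0 k l)) z +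
     pd U i (pd U k (fun y0 => g y0 j l)) z - pd U i (pd U l (fun y0 => g y0 j k)) z)).
  { intros y Sy. unfold Dfun. rewrite (pd_minusB U Slice Dir1); auto. rewrite (pd_plusB U Slice Dir1); auto.
    all: apply Sm_0; try (ap Sm_plus); apply Sm_pd; auto; apply gS; auto. }
  rewrite (pd2_at_ext U Slice Dir1 origin origin_Slice _ _ a0 b0 Ha Hb E).
  rewrite (pd2_at_minus U Slice Dir1 origin origin_Slice); auto.
  rewrite (pd2_plus_at U Slice Dir1 origin origin_Slice); auto.
  ap Sm_plus; auto.
Qed.

Definition RRv a0 b0 j k := /2 * sum1 n (fun i =>
  (Qv a0 b0 i j k i + Qv a0 b0 i k j i - Qv a0 b0 i i j k) - (Qv a0 b0 j i k i + Qv a0 b0 j k i i - Qv a0 b0 j i i k)).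

Lemma RR_val a0 b0 j k : Dir1 a0 -> Dir1 b0 -> Dir1 j -> Dir1 k ->
  pd U a0 (pd U b0 (fun z => Ric n U g ginv z j k)) origin = RRv a0 b0 j k.
Proof.
  intros Ha Hb Hj Hk. rewrite RR_main; auto. unfold Main.
  rewrite (pd2_at_sum1 U Slice Dir1 origin origin_Slice n
     (fun i z => /2 * (pd U i (Dfun j k i) z - pd U j (Dfun i k i) z))); auto.
  2:{ intros i Hi. ap Sm_scal. ap Sm_minus; apply Sm_pd; auto; apply DS; auto. }
  unfold RRv. rewrite <- sum1_scal. apply sum1_ext. intros i Hi.
  rewrite (pd2_at_scal U Slice Dir1 origin origin_Slice); auto.
  2:{ ap Sm_minus; apply Sm_pd; auto; apply DS; auto. }
  rewrite (pd2_at_minus U Slice Dir1 origin origin_Slice); auto.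
  2,3: apply Sm_pd; auto; apply DS; auto.
  rewrite !pd3_D; auto. rewrite !Q4_val; auto.
Qed.

Lemma g_iter_hp k l s m y : (1 <= k <= n)%nat -> (1 <= l <= n)%nat -> (forall m, In m s -> (m <= n)%nat) ->
  (m <= n)%nat -> U y -> has_pd U (iter_pd U s (fun y => g y k l)) m y (pd U m (iter_pd U s (fun y => g y k l)) y).
Proof.
  intros Hk Hl Hs Hm Uy. apply pd_hp. apply (proj2 (g_smooth k l Hk Hl s Hs)); auto.
Qed.
Lemma g_iter_cont k l s : (1 <= k <= n)%nat -> (1 <= l <= n)%nat -> (forall m, In m s -> (m <= n)%nat) ->
  cont_on n U (iter_pd U s (fun y => g y k l)).
Proof. intros Hk Hl Hs. apply (proj1 (g_smooth k l Hk Hl s Hs)). Qed.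

Lemma schwarz_g k l s b y : (1 <= k <= n)%nat -> (1 <= l <= n)%nat -> (forall m, In m s -> (m <= n)%nat) ->
  (1 <= b <= n)%nat -> U y ->
  pd U 0 (pd U b (iter_pd U s (fun y => g y k l))) y = pd U b (pd U 0 (iter_pd U s (fun y => g y k l))) y.
Proof.
  intros Hk Hl Hs Hb Uy.
  assert (Hs0 : forall m, In m (0%nat :: s) -> (m <= n)%nat) by (intros m [<-|H]; [lia|auto]).
  assert (Hsb : forall m, In m (b :: s) -> (m <= n)%nat) by (intros m [<-|H]; [lia|auto]).
  apply (schwarz n T V HV); auto.
  - intros z Uz. apply g_iter_hp; auto. lia.
  - intros z Uz. apply g_iter_hp; auto. lia.
  - intros z Uz. apply (g_iter_hp k l (0%nat :: s)); auto. lia.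
  - intros z Uz. apply (g_iter_hp k l (b :: s)); auto. lia.
  - apply (g_iter_cont k l (b :: 0%nat :: s)); auto. intros m [<-|[<-|H]]; auto; lia.
  - apply (g_iter_cont k l (0%nat :: b :: s)); auto. intros m [<-|[<-|H]]; auto; lia.
Qed.

Lemma Box_app0 y : Box y -> approachable U y 0.
Proof. intros By. apply (@rg_app U Box Dir0 Box_region); auto. unfold Dir0; lia. Qed.

Lemma pd0_g_ric k l : (1 <= k <= n)%nat -> (1 <= l <= n)%nat ->
  eqB Slice (pd U 0 (fun y => g y k l)) (fun z => -2 * Ric n U g ginv z k l).
Proof.
  intros Hk Hl y Sy. apply pd_spec. apply Box_app0, Slice_Box; auto. apply g_ricci; auto. apply Slice_U; auto.
Qed.

Lemma RicS k l : (1 <= k <= n)%nat -> (1 <= l <= n)%nat -> Sm U Slice Dir1 (fun z => Ric n U g ginv z k l).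
Proof. intros. ap (Sm_Ric Slice Dir1); auto. apply gS. apply ginvS. Qed.

Lemma dt3 i j k l : (1 <= i <= n)%nat -> (1 <= j <= n)%nat -> (1 <= k <= n)%nat -> (1 <= l <= n)%nat ->
  pd U 0 (pd U i (pd U j (fun y => g y k l))) origin = -2 * RRv i j k l.
Proof.
  intros Hi Hj Hk Hl.
  assert (Hs : forall m, In m (j :: nil) -> (m <= n)%nat) by (intros m [<-|[]]; lia).
  pose proof (schwarz_g k l (j :: nil) i origin Hk Hl Hs Hi (Box_U _ origin_Box)) as E1. simpl in E1.
  rewrite E1.
  assert (HE : eqB Slice (pd U 0 (pd U j (fun y => g y k l))) (pd U j (pd U 0 (fun y => g y k l)))).
  { intros y Sy. pose proof (schwarz_g k l nil j y Hk Hl (fun m H => False_ind _ H) Hj (Slice_U _ Sy)). simpl in H. auto. }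
  rewrite (pd_extB U Slice Dir1 _ _ i Hi HE origin origin_Slice).
  rewrite (pd2_at_ext U Slice Dir1 origin origin_Slice _ _ i j Hi Hj (pd0_g_ric k l Hk Hl)).
  rewrite (pd2_at_scal U Slice Dir1 origin origin_Slice); auto. rewrite RR_val; auto.
  apply RicS; auto.
Qed.

Lemma g0 x y : (1 <= x <= n)%nat -> (1 <= y <= n)%nat -> g origin x y = kdelta x y.
Proof. intros. rewrite g_slice; auto. rewrite !F1_0. ring. apply origin_Slice. Qed.
Lemma ginv0 x y : (1 <= x <= n)%nat -> (1 <= y <= n)%nat -> ginv origin x y = kdelta x y.
Proof.
  intros Hx Hy. rewrite (ginv_expand origin x y (Box_U _ origin_Box) Hx Hy).
  rewrite (sum1_ext n _ (fun _ => 0)). rewrite sum1_zero; ring.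
  intros j Hj. rewrite (g0 j y Hj Hy). ring.
Qed.
Lemma D0 j k l : (1 <= j <= n)%nat -> (1 <= k <= n)%nat -> (1 <= l <= n)%nat -> Dfun j k l origin = 0.
Proof. intros. apply (Z_val U Dir1 origin 2). apply Z_D; auto. Qed.
Lemma dD0 i j k l : Dir1 i -> (1 <= j <= n)%nat -> (1 <= k <= n)%nat -> (1 <= l <= n)%nat -> pd U i (Dfun j k l) origin = 0.
Proof. intros. apply (Z_val U Dir1 origin 1). apply Z_pd; auto. apply Z_D; auto. Qed.
Lemma dg0 i x y : Dir1 i -> (1 <= x <= n)%nat -> (1 <= y <= n)%nat -> pd U i (fun z => g z x y) origin = 0.
Proof. intros. apply (Z_val U Dir1 origin 2). apply Z_dg; auto. Qed.
Lemma dginv0 i x y : Dir1 i -> (1 <= x <= n)%nat -> (1 <= y <= n)%nat -> pd U i (fun z => ginv z x y) origin = 0.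
Proof.
  intros. rewrite (pd_ginvB Slice Dir1 Slice_Box Dir1_n); auto. 2: apply origin_Slice.
  rewrite (sum1_ext n _ (fun _ => 0)). rewrite sum1_zero; ring.
  intros c Hc. rewrite (sum1_ext n _ (fun _ => 0)). apply sum1_zero.
  intros d Hd. rewrite dg0; auto. ring.
Qed.
Lemma Gam0 j k m : (1 <= j <= n)%nat -> (1 <= k <= n)%nat -> (1 <= m <= n)%nat -> Gam j k m origin = 0.
Proof. intros. apply (Z_val U Dir1 origin 2). apply Z_Gam; auto. Qed.
Lemma dGam0 i j k m : Dir1 i -> (1 <= j <= n)%nat -> (1 <= k <= n)%nat -> (1 <= m <= n)%nat -> pd U i (Gam j k m) origin = 0.
Proof. intros. apply (Z_val U Dir1 origin 1). apply Z_pd; auto. apply Z_Gam; auto. Qed.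
Lemma Rup0 i j k m : (1 <= i <= n)%nat -> (1 <= j <= n)%nat -> (1 <= k <= n)%nat -> (1 <= m <= n)%nat ->
  Rup n U g ginv origin i j k m = 0.
Proof.
  intros. unfold Rup. change (fun z => Gamma n U g ginv z j k m) with (Gam j k m).
  change (fun z => Gamma n U g ginv z i k m) with (Gam i k m).
  rewrite !dGam0; auto. rewrite (sum1_ext n _ (fun _ => 0)). rewrite sum1_zero; ring.
  intros p Hp. change (Gamma n U g ginv origin j k p) with (Gam j k p origin).
  change (Gamma n U g ginv origin i k p) with (Gam i k p origin). rewrite !Gam0; auto. ring.
Qed.

Lemma hp0 F : Sm U Box Dir0 F -> has_pd U F 0 origin (pd U 0 F origin).
Proof. intros SF. apply (Sm_hp U Box Dir0); auto. apply origin_Box. unfold Dir0; lia. Qed.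

Lemma Dir0_of i : (1 <= i <= n)%nat -> Dir0 i.
Proof. unfold Dir0; lia. Qed.
Lemma Dir0_0 : Dir0 0.
Proof. unfold Dir0; lia. Qed.

Lemma dt_dGam i j k m : (1 <= i <= n)%nat -> (1 <= j <= n)%nat -> (1 <= k <= n)%nat -> (1 <= m <= n)%nat ->
  pd U 0 (pd U i (Gam j k m)) origin = /2 * pd U 0 (pd U i (Dfun j k m)) origin.
Proof.
  intros Hi Hj Hk Hm.
  assert (E : eqB Box (pd U i (Gam j k m)) (fun z => /2 * sum1 n (fun q =>
     pd U i (fun y => ginv y m q) z * Dfun j k q z + ginv z m q * pd U i (Dfun j k q) z))).
  { intros z Bz. change (Gam j k m) with (fun z => /2 * sum1 n (fun q => ginv z m q * Dfun j k q z)).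
    rewrite (pd_scalB U Box Dir0); auto. f_equal.
    rewrite (pd_sum1B U Box Dir0 n (fun q z => ginv z m q * Dfun j k q z)); auto.
    apply sum1_ext. intros q Hq. rewrite (pd_multB U Box Dir0); auto.
    apply Sm_0, ginvB; auto. apply Sm_0, DB; auto. apply Dir0_of; auto.
    intros q Hq. apply Sm_0. ap Sm_mult. apply ginvB; auto. apply DB; auto. apply Dir0_of; auto.
    apply Sm_0. ap Sm_sum1. intros q Hq. ap Sm_mult. apply ginvB; auto. apply DB; auto. apply Dir0_of; auto. }
  rewrite (pd_extB U Box Dir0 _ _ 0 Dir0_0 E origin origin_Box).
  apply (pd_specB U Box Dir0); auto. apply origin_Box. apply Dir0_0.
  eapply hp_eq. apply hp_scal. apply hp_sum1. intros q Hq. apply hp_plus; apply hp_mult; apply hp0.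
  apply Sm_pd. apply ginvB; auto. apply Dir0_of; auto. apply DB; auto.
  apply ginvB; auto. apply Sm_pd. apply DB; auto. apply Dir0_of; auto.
  f_equal. rewrite (sum1_ext n _ (fun q => kdelta m q * pd U 0 (pd U i (Dfun j k q)) origin)).
  apply sum1_kdelta'; auto.
  intros q Hq. rewrite (D0 j k q), (dD0 i j k q), (dginv0 i m q), (ginv0 m q); auto. ring.
Qed.

Lemma RupB i j k m : (1 <= i <= n)%nat -> (1 <= j <= n)%nat -> (1 <= k <= n)%nat -> (1 <= m <= n)%nat ->
  Sm U Box Dir0 (fun z => Rup n U g ginv z i j k m).
Proof. intros. ap (Sm_Rup Box Dir0); auto. apply gB. apply ginvB. apply Dir0_of. Qed.

Lemma dt_Rup i j k m : (1 <= i <= n)%nat -> (1 <= j <= n)%nat -> (1 <= k <= n)%nat -> (1 <= m <= n)%nat ->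
  pd U 0 (fun z => Rup n U g ginv z i j k m) origin =
  /2 * pd U 0 (pd U i (Dfun j k m)) origin - /2 * pd U 0 (pd U j (Dfun i k m)) origin.
Proof.
  intros Hi Hj Hk Hm. apply (pd_specB U Box Dir0); auto. apply origin_Box. apply Dir0_0.
  unfold Rup. change (fun z => Gamma n U g ginv z j k m) with (Gam j k m).
  change (fun z => Gamma n U g ginv z i k m) with (Gam i k m).
  eapply hp_eq. apply hp_plus. apply hp_minus; apply hp0; apply Sm_pd; try apply GamB; auto; apply Dir0_of; auto.
  apply hp_sum1. intros p Hp. apply hp_minus; apply hp_mult; apply hp0; apply GamB; auto.
  rewrite !dt_dGam; auto.
  rewrite (sum1_ext n _ (fun _ => 0)). rewrite sum1_zero. ring.
  intros p Hp. change (Gamma n U g ginv origin j k p) with (Gam j k p origin).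
  change (Gamma n U g ginv origin i k p) with (Gam i k p origin).
  change (Gamma n U g ginv origin i p m) with (Gam i p m origin).
  change (Gamma n U g ginv origin j p m) with (Gam j p m origin).
  rewrite !Gam0; auto. ring.
Qed.

Lemma dt_D i j k l : (1 <= i <= n)%nat -> (1 <= j <= n)%nat -> (1 <= k <= n)%nat -> (1 <= l <= n)%nat ->
  pd U 0 (pd U i (Dfun j k l)) origin = -2 * RRv i j k l + -2 * RRv i k j l - -2 * RRv i l j k.
Proof.
  intros Hi Hj Hk Hl.
  assert (SG : forall x y p q, (1 <= x <= n)%nat -> (1 <= y <= n)%nat -> (1 <= p <= n)%nat -> (1 <= q <= n)%nat ->
    Sm U Box Dir0 (pd U x (pd U y (fun y0 => g y0 p q)))).
  { intros. apply Sm_pd; try apply Dir0_of; auto. apply Sm_pd; try apply Dir0_of; auto. apply gB; auto. }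
  assert (E : eqB Box (pd U i (Dfun j k l)) (fun z => pd U i (pd U j (fun y0 => g y0 k l)) z +
     pd U i (pd U k (fun y0 => g y0 j l)) z - pd U i (pd U l (fun y0 => g y0 j k)) z)).
  { intros y By. unfold Dfun. rewrite (pd_minusB U Box Dir0); auto. rewrite (pd_plusB U Box Dir0); auto.
    all: try apply Dir0_of; auto.
    all: apply Sm_0; try (ap Sm_plus); apply Sm_pd; try apply Dir0_of; auto; apply gB; auto. }
  rewrite (pd_extB U Box Dir0 _ _ 0 Dir0_0 E origin origin_Box).
  apply (pd_specB U Box Dir0); auto. apply origin_Box. apply Dir0_0.
  eapply hp_eq. apply hp_minus. apply hp_plus. all: try (apply hp0; apply SG; auto).
  rewrite !dt3; auto.
Qed.

Definition dRv i j k l :=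
  /2 * ((-2 * RRv i j k l + -2 * RRv i k j l - -2 * RRv i l j k) - (-2 * RRv j i k l + -2 * RRv j k i l - -2 * RRv j l i k)).

Lemma dt_Rm i j k l : (1 <= i <= n)%nat -> (1 <= j <= n)%nat -> (1 <= k <= n)%nat -> (1 <= l <= n)%nat ->
  has_pd U (fun z => Rm n U g ginv z i j k l) 0 origin (dRv i j k l).
Proof.
  intros Hi Hj Hk Hl. unfold Rm. eapply hp_eq.
  apply hp_sum1. intros m Hm. apply hp_mult; apply hp0. apply RupB; auto. apply gB; auto.
  rewrite (sum1_ext n _ (fun m => kdelta m l * pd U 0 (fun z => Rup n U g ginv z i j k m) origin)).
  rewrite sum1_kdelta by auto. rewrite dt_Rup, !dt_D; auto. unfold dRv. ring.
  intros m Hm. rewrite Rup0, g0; auto. rewrite kdelta_sym. ring.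
Qed.

Lemma Rm0 i j k l : (1 <= i <= n)%nat -> (1 <= j <= n)%nat -> (1 <= k <= n)%nat -> (1 <= l <= n)%nat ->
  Rm n U g ginv origin i j k l = 0.
Proof.
  intros. unfold Rm. rewrite (sum1_ext n _ (fun _ => 0)). apply sum1_zero.
  intros m Hm. rewrite Rup0; auto. ring.
Qed.
End Main.

Ltac eqb_simpl :=
  repeat match goal with
  | |- context [Nat.eqb ?x ?x] => rewrite (Nat.eqb_refl x)
  | |- context [Nat.eqb ?x ?y] =>
      first [ let H := fresh in assert (H : x <> y) by lia; rewrite (proj2 (Nat.eqb_neq x y) H); clear H
            | let H := fresh in assert (H : x = y) by lia; rewrite (proj2 (Nat.eqb_eq x y) H); clear H ]
  end; cbv beta iota.

Lemma sum1_split n F x : (1 <= x <= n)%nat -> sum1 n F = F x + sum1 n (fun q => if Nat.eqb q x then 0 else F q).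
Proof.
  intros Hx. rewrite <- (sum1_kdelta n x F Hx). rewrite <- sum1_plus. apply sum1_ext. intros q Hq.
  unfold kdelta. destruct (Nat.eqb_spec q x); subst; ring.
Qed.

Section Alg.
Variables (n : nat) (a : nat -> nat -> R).
Notation dR := (dRv n a).

Definition RRs a0 b0 j k i :=
  (Qv a a0 b0 i j k i + Qv a a0 b0 i k j i - Qv a a0 b0 i i j k) - (Qv a a0 b0 j i k i + Qv a a0 b0 j k i i - Qv a a0 b0 j i i k).
Definition Big i j k l q :=
  /2 * (- (RRs i j k l q + RRs i k j l q - RRs i l j k q) + (RRs j i k l q + RRs j k i l q - RRs j l i k q)).

Lemma RRv_sum a0 b0 j k : RRv n a a0 b0 j k = sum1 n (fun q => /2 * RRs a0 b0 j k q).
Proof. unfold RRv, RRs. rewrite sum1_scal. reflexivity. Qed.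

Lemma dR_sum i j k l : dR i j k l = sum1 n (Big i j k l).
Proof.
  unfold dRv. rewrite !RRv_sum.
  rewrite (sum1_ext n (Big i j k l) (fun q => -1 * (/2 * RRs i j k l q) + (-1 * (/2 * RRs i k j l q) +
     (1 * (/2 * RRs i l j k q) + (1 * (/2 * RRs j i k l q) + (1 * (/2 * RRs j k i l q) + -1 * (/2 * RRs j l i k q)))))))
    by (intros; unfold Big; ring).
  rewrite !sum1_plus, !sum1_scal. field.
Qed.

Ltac big_eval := unfold Big, RRs, Qv, Tc, kdelta; eqb_simpl; field.

Lemma alg_i i j k l : (1 <= i <= n)%nat -> (1 <= j <= n)%nat -> (1 <= k <= n)%nat -> (1 <= l <= n)%nat ->
  i <> j -> i <> k -> i <> l -> j <> k -> j <> l -> k <> l -> dR i j k l = 0.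
Proof.
  intros Hi Hj Hk Hl H1 H2 H3 H4 H5 H6. rewrite dR_sum.
  rewrite (sum1_split n _ i), (sum1_split n _ j), (sum1_split n _ k), (sum1_split n _ l) by auto.
  rewrite (sum1_ext n _ (fun _ => 0)). rewrite sum1_zero. cbv beta. eqb_simpl.
  big_eval.
  intros q Hq. destruct (Nat.eqb_spec q l). ring. destruct (Nat.eqb_spec q k). ring.
  destruct (Nat.eqb_spec q j). ring. destruct (Nat.eqb_spec q i). ring.
  big_eval.
Qed.
Lemma alg_ii i j l : (1 <= i <= n)%nat -> (1 <= j <= n)%nat -> (1 <= l <= n)%nat -> i <> j -> i <> l -> j <> l ->
  dR i j j l = 8 * (a i l * a l j + a l i * a i j) - 8 * (a i j * a l j).
Proof.
  intros Hi Hj Hl H1 H2 H3. rewrite dR_sum.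
  rewrite (sum1_split n _ i), (sum1_split n _ j), (sum1_split n _ l) by auto.
  rewrite (sum1_ext n _ (fun _ => 0)). rewrite sum1_zero. cbv beta. eqb_simpl.
  big_eval.
  intros q Hq. destruct (Nat.eqb_spec q l). ring. destruct (Nat.eqb_spec q j). ring.
  destruct (Nat.eqb_spec q i). ring.
  big_eval.
Qed.
Lemma alg_iii i j k : (1 <= i <= n)%nat -> (1 <= j <= n)%nat -> (1 <= k <= n)%nat -> i <> j -> i <> k -> j <> k ->
  dR i j k j = 8 * (a i j * a k j) - 8 * (a i k * a k j + a k i * a i j).
Proof.
  intros Hi Hj Hk H1 H2 H3. rewrite dR_sum.
  rewrite (sum1_split n _ i), (sum1_split n _ j), (sum1_split n _ k) by auto.
  rewrite (sum1_ext n _ (fun _ => 0)). rewrite sum1_zero. cbv beta. eqb_simpl.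
  big_eval.
  intros q Hq. destruct (Nat.eqb_spec q k). ring. destruct (Nat.eqb_spec q j). ring.
  destruct (Nat.eqb_spec q i). ring.
  big_eval.
Qed.
Lemma alg_iv i j l : (1 <= i <= n)%nat -> (1 <= j <= n)%nat -> (1 <= l <= n)%nat -> i <> j -> i <> l -> j <> l ->
  dR i j i l = 8 * (a l i * a j i) - 8 * (a j l * a l i + a l j * a j i).
Proof.
  intros Hi Hj Hl H1 H2 H3. rewrite dR_sum.
  rewrite (sum1_split n _ i), (sum1_split n _ j), (sum1_split n _ l) by auto.
  rewrite (sum1_ext n _ (fun _ => 0)). rewrite sum1_zero. cbv beta. eqb_simpl.
  big_eval.
  intros q Hq. destruct (Nat.eqb_spec q l). ring. destruct (Nat.eqb_spec q j). ring.
  destruct (Nat.eqb_spec q i). ring.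
  big_eval.
Qed.
Lemma alg_v i j : (1 <= i <= n)%nat -> (1 <= j <= n)%nat -> i <> j ->
  dR i j i j = 8 * (a i j ^ 2 + a j i ^ 2)
           - 8 * (sum1 n (fun q => if (Nat.eqb q i || Nat.eqb q j)%bool then 0 else a q i * a q j)
                  + 3 * a i i * a i j + 3 * a j j * a j i).
Proof.
  intros Hi Hj H1. rewrite dR_sum.
  rewrite (sum1_split n _ i), (sum1_split n _ j) by auto.
  rewrite (sum1_ext n _ (fun q => -8 * (if (Nat.eqb q i || Nat.eqb q j)%bool then 0 else a q i * a q j))).
  rewrite sum1_scal. set (S := sum1 n _). cbv beta. eqb_simpl.
  big_eval.
  intros q Hq. destruct (Nat.eqb_spec q j); destruct (Nat.eqb_spec q i); unfold orb; cbv beta iota; try ring.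
  big_eval.
Qed.
Lemma Tc_sym23 k c d : Tc a k c d = Tc a k d c.
Proof. unfold Tc, kdelta. destruct (Nat.eqb_spec c d), (Nat.eqb_spec d c), (Nat.eqb_spec k d), (Nat.eqb_spec k c); subst; try lia; ring. Qed.
Lemma Qv_sym a0 b0 c d k l : Qv a a0 b0 c d k l = Qv a b0 a0 c d k l.
Proof. unfold Qv. rewrite (Tc_sym23 l a0 b0), (Tc_sym23 k a0 b0). ring. Qed.
Lemma RRv_sym a0 b0 j k : RRv n a a0 b0 j k = RRv n a b0 a0 j k.
Proof. unfold RRv. f_equal. apply sum1_ext. intros. rewrite !(Qv_sym a0 b0). auto. Qed.

Lemma dR_antisym i j k l : dR j i k l = - dR i j k l.
Proof. unfold dRv. ring. Qed.
Lemma dR_ii i k l : dR i i k l = 0.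
Proof. unfold dRv. ring. Qed.
Lemma dR_kk i j k : dR i j k k = 0.
Proof. unfold dRv. rewrite (RRv_sym j i k k). ring. Qed.

Lemma alg_third (Hc : forall al be ga, (1 <= al <= n)%nat -> (1 <= be <= n)%nat ->
      (1 <= ga <= n)%nat -> al <> be -> be <> ga -> al <> ga ->
      a al be * a be ga + a be al * a al ga = a al ga * a be ga)
  i j k l : (1 <= i <= n)%nat -> (1 <= j <= n)%nat -> (1 <= k <= n)%nat -> (1 <= l <= n)%nat ->
  ~ (i = k /\ j = l) -> ~ (i = l /\ j = k) -> dR i j k l = 0.
Proof.
  intros Hi Hj Hk Hl H1 H2.
  destruct (Nat.eq_dec i j) as [<-|Hij]. apply dR_ii.
  destruct (Nat.eq_dec k l) as [<-|Hkl]. apply dR_kk.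
  destruct (Nat.eq_dec i k) as [<-|Hik].
  { assert (j <> l) by tauto. rewrite alg_iv; auto. rewrite (Hc j l i); auto. ring. }
  destruct (Nat.eq_dec j l) as [<-|Hjl].
  { rewrite alg_iii; auto. rewrite (Hc i k j); auto. ring. }
  destruct (Nat.eq_dec j k) as [<-|Hjk].
  { rewrite alg_ii; auto. rewrite (Hc i l j); auto. ring. }
  destruct (Nat.eq_dec i l) as [<-|Hil].
  { rewrite dR_antisym, alg_iii; auto. rewrite (Hc j k i); auto. ring. }
  apply alg_i; auto.
Qed.
End Alg.

Lemma common_delta (P : nat -> R -> Prop) m :
  (forall i d d', 0 < d' <= d -> P i d -> P i d') ->
  (forall i, (1 <= i <= m)%nat -> exists d, 0 < d /\ P i d) ->
  exists d, 0 < d /\ forall i, (1 <= i <= m)%nat -> P i d.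
Proof.
  intros Hmono. induction m; intros H.
  - exists 1. split. lra. intros; lia.
  - destruct IHm as [d1 [Hd1 H1]]. intros; apply H; lia.
    destruct (H (S m)) as [d2 [Hd2 H2]]. lia.
    exists (Rmin d1 d2). split. apply Rmin_pos; auto.
    intros i Hi. destruct (Nat.eq_dec i (S m)) as [->|Hne].
    + apply (Hmono _ d2); auto. split. apply Rmin_pos; auto. apply Rmin_r.
    + apply (Hmono _ d1); auto. split. apply Rmin_pos; auto. apply Rmin_l. apply H1. lia.
Qed.

Theorem mainTheorem1 (n : nat) (Hn : (2 <= n)%nat) (a : nat -> nat -> R)
  (T : R) (HT : 0 < T) (V : (nat -> R) -> Prop) (HV : open_nbhd0 n V)
  (g ginv : (nat -> R) -> nat -> nat -> R)
  (Hflow : ricci_flow n (domain T V) g ginv)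
  (Hinit : forall y, domain T V y -> y 0%nat = 0 ->
     forall i j, (1 <= i <= n)%nat -> (1 <= j <= n)%nat ->
     g y i j = graph_metric n a y i j) :
  let U := domain T V in
  let Rmt := fun i j k l => (fun z => Rm n U g ginv z i j k l) in
  (forall i j k l, (1 <= i <= n)%nat -> (1 <= j <= n)%nat ->
     (1 <= k <= n)%nat -> (1 <= l <= n)%nat ->
     Rm n U g ginv origin i j k l = 0) /\
  (forall i j k l, (1 <= i)%nat -> (i < j)%nat -> (j <= n)%nat ->
     (1 <= k)%nat -> (k < l)%nat -> (l <= n)%nat -> (i <= k)%nat ->
     (i <> k -> i <> l -> j <> k -> j <> l ->
        has_pd U (Rmt i j k l) 0%nat origin 0) /\
     (i < k -> k = j -> j < l ->
        has_pd U (Rmt i j k l) 0%nat origin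
          (8 * (a i l * a l j + a l i * a i j) - 8 * (a i j * a l j)))%nat /\
     (i < k -> k < l -> l = j ->
        has_pd U (Rmt i j k l) 0%nat origin
          (8 * (a i j * a k j) - 8 * (a i k * a k j + a k i * a i j)))%nat /\
     (i = k -> j <> l ->
        has_pd U (Rmt i j k l) 0%nat origin
          (8 * (a l i * a j i) - 8 * (a j l * a l i + a l j * a j i))) /\
     (i = k -> j = l ->
        has_pd U (Rmt i j k l) 0%nat origin
          (8 * (a i j ^ 2 + a j i ^ 2)
           - 8 * (sum1 n (fun q => if (Nat.eqb q i || Nat.eqb q j)%bool then 0
                                   else a q i * a q j)
                  + 3 * a i i * a i j + 3 * a j j * a j i)))) /\
  ((forall al be ga, (1 <= al <= n)%nat -> (1 <= be <= n)%nat ->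
      (1 <= ga <= n)%nat -> al <> be -> be <> ga -> al <> ga ->
      a al be * a be ga + a be al * a al ga = a al ga * a be ga) ->
   forall i j k l, (1 <= i <= n)%nat -> (1 <= j <= n)%nat ->
     (1 <= k <= n)%nat -> (1 <= l <= n)%nat ->
     ~ (i = k /\ j = l) -> ~ (i = l /\ j = k) ->
     has_pd U (Rmt i j k l) 0%nat origin 0).
Proof.
  intros U Rmt.
  pose proof HV as [HV0 [HVinv HVop]].
  destruct (HVop origin HV0) as [r0 [Hr0 Hr0V]].
  assert (HnR : 0 < INR n) by (apply lt_0_INR; lia).
  set (eps := / (4 * INR n)).
  assert (Heps : 0 < eps) by (unfold eps; apply Rinv_0_lt_compat; lra).
  assert (Uo : U origin) by (split; [unfold origin; lra|auto]).
  assert (Hg0 : forall i j, (1 <= i <= n)%nat -> (1 <= j <= n)%nat -> g origin i j = kdelta i j).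
  { intros i j Hi Hj. rewrite Hinit; auto. rewrite graph_metric_eq, !F1_0 by auto. ring. }
  assert (Hcont : exists d, 0 < d /\ forall i, (1 <= i <= n)%nat -> forall j, (1 <= j <= n)%nat ->
     forall z, U z -> (forall k, (k <= n)%nat -> Rabs (z k - origin k) < d) -> Rabs (g z i j - g origin i j) < eps).
  { apply common_delta.
    - intros i d d' Hd H j Hj z Uz Hz. apply H; auto. intros k Hk. specialize (Hz k Hk). lra.
    - intros i Hi. apply common_delta.
      + intros j d d' Hd H z Uz Hz. apply H; auto. intros k Hk. specialize (Hz k Hk). lra.
      + intros j Hj. pose proof (proj1 (g_smooth n T V g ginv Hflow i j Hi Hj nil (fun m H => False_ind _ H))) as C.
        simpl in C. apply (C origin Uo eps Heps). }
  destruct Hcont as [d [Hd Hcd]].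
  set (r := Rmin (Rmin r0 T) d).
  assert (Hr : 0 < r) by (unfold r; repeat apply Rmin_pos; auto).
  assert (Hr1 : r <= r0) by (unfold r; pose proof (Rmin_l (Rmin r0 T) d); pose proof (Rmin_l r0 T); lra).
  assert (HrT : r <= T) by (unfold r; pose proof (Rmin_l (Rmin r0 T) d); pose proof (Rmin_r r0 T); lra).
  assert (Hrd : r <= d) by (unfold r; apply Rmin_r).
  assert (HrV : forall z, (forall k, (1 <= k <= n)%nat -> Rabs (z k) < r) -> V z).
  { intros z Hz. apply Hr0V. intros k Hk. unfold origin. rewrite Rminus_0_r. specialize (Hz k Hk). lra. }
  assert (Hrg : forall z, Box n r z -> forall i j, (1 <= i <= n)%nat -> (1 <= j <= n)%nat ->
     Rabs (g z i j - kdelta i j) <= / (4 * INR n)).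
  { intros z [Bz0 Bz] i j Hi Hj. rewrite <- Hg0 by auto. left. apply Hcd; auto.
    split. lra. apply HrV. auto.
    intros k Hk. unfold origin. rewrite Rminus_0_r. destruct k.
    rewrite Rabs_right; lra. specialize (Bz (S k) ltac:(lia)). lra. }
  assert (DT : forall i j k l, (1 <= i <= n)%nat -> (1 <= j <= n)%nat -> (1 <= k <= n)%nat -> (1 <= l <= n)%nat ->
     forall v, dRv n a i j k l = v -> has_pd U (Rmt i j k l) 0%nat origin v).
  { intros i j k l Hi Hj Hk Hl v Hv. eapply hp_eq; [|exact Hv].
    apply (dt_Rm n Hn a T V HV g ginv Hflow Hinit r Hr HrT HrV Hrg); auto. }
  split; [|split].
  - intros i j k l Hi Hj Hk Hl. apply (Rm0 n Hn a T V g ginv Hflow Hinit r Hr HrT HrV Hrg); auto.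
  - intros i j k l Hi Hij Hj Hk Hkl Hl Hik.
    split; [|split; [|split; [|split]]].
    + intros. apply DT; try lia. apply alg_i; lia.
    + intros. subst k. apply DT; try lia. apply alg_ii; lia.
    + intros. subst l. apply DT; try lia. apply alg_iii; lia.
    + intros. subst k. apply DT; try lia. apply alg_iv; lia.
    + intros. subst k l. apply DT; try lia. apply alg_v; lia.
  - intros Hc i j k l Hi Hj Hk Hl H1 H2. apply DT; auto. apply alg_third; auto.
Qed.
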